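(* Let $\gamma>0$ and $f_I=\chi_{[0,1/(1+\gamma)]}$ (value $1$ on $[0,\frac1{1+\gamma}]$, $0$ elsewhere), so that $u_I(\xi)=(\gamma\xi)^{1/\gamma}\chi_{[0,1/\gamma]}(\xi)$. Then the entropy solution $u$ of the split Cauchy problem with datum $u_I$ vanishes for $\xi<0$ and for $\xi>0$ is $$u(\xi,t)=\begin{cases}\left(\frac{\gamma\xi}{1-\gamma t}\right)^{1/\gamma}, & 0\le\xi\le\frac1\gamma-t,\ 0\le t<\frac1\gamma,\\[1mm] \left(\frac{1-\gamma\xi}{\gamma t}\right)^{1/\gamma}, & \max\{0,\frac1\gamma-t\}\le\xi\le\frac1\gamma,\\[1mm] 0&\text{otherwise.}\end{cases}$$ Consequently $\rho(x,t)=\xi'(x)u(\xi(x),t)$ is given, for $x>0$, by $$\rho(x,t)=\begin{cases}(1-\gamma t)^{-1/\gamma}, & 0< x\le \frac{(1-\gamma t)^{(1+\gamma)/\gamma}}{1+\gamma},\ 0\le t<\frac1\gamma,\\[1mm] \left[\frac{((1+\gamma)x)^{-\gamma/(1+\gamma)}-1}{\gamma t}\right]^{1/\gamma}, & \max\Bigl\{0,\frac{(1-\gamma t)_+^{(1+\gamma)/\gamma}}{1+\gamma}\Bigr\}\le x\le\frac1{1+\gamma},\\[1mm] 0&\text{otherwise,}\end{cases}$$ and $\rho(x,t)=0$ for $x<0$. In particular $\int_0^\infty\rho(x,t)\,dx=\frac1{1+\gamma}$ for $0\le t\le\frac1\gamma$, while $\int_0^\infty\rho(x,t)\,dx=\frac{1}{1+\gamma}(\gamma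 t)^{-1/\gamma}$ for $t\ge\frac1\gamma$.
   Context: Here $\xi(x)=\operatorname{sign}(x)\frac1\gamma((1+\gamma)|x|)^{\gamma/(1+\gamma)}$ and $u_I(\xi)=(\gamma|\xi|)^{1/\gamma}f_I\bigl(\operatorname{sign}(\xi)\frac{1}{1+\gamma}(\gamma|\xi|)^{(1+\gamma)/\gamma}\bigr)$. An entropy solution of the split Cauchy problem with datum $u_I$ means: $u\in L^\infty([0,\infty);L^1\cap BV(\mathbb{R}))$, $u|_{\xi>0}$ a weak solution of $u_t-(\frac{1}{1+\gamma}u^{1+\gamma})_\xi=0$ on $\xi>0$ with datum $u_I|_{\xi>0}$ (no boundary condition at $\xi=0$), $u|_{\xi<0}$ a weak solution of $u_t+(\frac{1}{1+\gamma}u^{1+\gamma})_\xi=0$ on $\xi<0$ with datum $u_I|_{\xi<0}$, and for every $t$: $u(\xi_0^-,t)\ge u(\xi_0^+,t)$ if $\xi_0<0$, $u(\xi_0^-,t)\le u(\xi_0^+,t)$ if $\xi_0>0$ (such a solution is unique). *)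

(* Defs.v *)
From Stdlib Require Import Reals Lra List Sorted.
Import ListNotations.
Open Scope R_scope.

(* x^y for x > 0; we set it to 0 when x <= 0 (so 0^y = 0 for the positive
   exponents used here).  Stdlib's Rpower 0 y would give exp 0 = 1. *)
Definition powp (x y : R) : R := if Rlt_dec 0 x then Rpower x y else 0.

Definition sgn (x : R) : R :=
  if Rlt_dec 0 x then 1 else if Rlt_dec x 0 then -1 else 0.

Definition xi (g x : R) : R :=
  sgn x * (/ g * powp ((1 + g) * Rabs x) (g / (1 + g))).

Definition dxi (g x : R) : R := powp ((1 + g) * Rabs x) (- / (1 + g)).

Definition u_I (g : R) (fI : R -> R) (z : R) : R :=
  powp (g * Rabs z) (/ g) *
  fI (sgn z * (/ (1 + g) * powp (g * Rabs z) ((1 + g) / g))).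

Definition fI_ex (g x : R) : R :=
  if Rle_dec 0 x then (if Rle_dec x (/ (1 + g)) then 1 else 0) else 0.

Definition flux (g v : R) : R := / (1 + g) * powp v (1 + g).

Definition is_RInt (f : R -> R) (a b v : R) : Prop :=
  exists pr : Riemann_integrable f a b, RiemannInt pr = v.

Definition cont2 (f : R -> R -> R) : Prop :=
  forall x t eps, 0 < eps -> exists delta, 0 < delta /\
    forall x' t', Rabs (x' - x) < delta -> Rabs (t' - t) < delta ->
      Rabs (f x' t' - f x t) < eps.

Definition C1_test (phi phix phit : R -> R -> R) : Prop :=
  (forall x t, derivable_pt_lim (fun y => phi y t) x (phix x t)) /\
  (forall x t, derivable_pt_lim (fun s => phi x s) t (phit x t)) /\
  cont2 phix /\ cont2 phit.

(* Weak solution of  u_t + (s * F(u))_xi = 0  on the open set D (a half line)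
   times [0,oo), with initial datum uI, for test functions whose support is a
   compact box [a,b] x [0,T] with [a,b] inside D (no condition at the
   boundary of D; t = 0 is allowed, giving the datum term):
     int_0^T int_a^b (u phi_t + s F(u) phi_xi) dxi dt
       + int_a^b uI(xi) phi(xi,0) dxi = 0. *)
Definition weak_sol (g : R) (D : R -> Prop) (s : R) (uI : R -> R)
    (u : R -> R -> R) : Prop :=
  forall (phi phix phit : R -> R -> R) (a b T : R),
    C1_test phi phix phit -> a < b -> 0 < T ->
    (forall x, a <= x <= b -> D x) ->
    (forall x t, (x < a \/ b < x \/ T < t) -> phi x t = 0) ->
    exists (G : R -> R) (I0 I1 : R),
      (forall t, 0 <= t <= T ->
         is_RInt (fun x => u x t * phit x t + s * flux g (u x t) * phix x t)
                 a b (G t)) /\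
      is_RInt G 0 T I0 /\
      is_RInt (fun x => uI x * phi x 0) a b I1 /\
      I0 + I1 = 0.

Fixpoint var_list (f : R -> R) (l : list R) : R :=
  match l with
  | x :: ((y :: _) as l') => Rabs (f y - f x) + var_list f l'
  | _ => 0
  end.

Definition L1BV_bound (f : R -> R) (M : R) : Prop :=
  (forall a b, a < b -> exists I, is_RInt (fun z => Rabs (f z)) a b I /\ I <= M) /\
  (forall l : list R, Sorted Rlt l -> var_list f l <= M).

Definition left_lim (f : R -> R) (x0 l : R) : Prop :=
  forall eps, 0 < eps -> exists delta, 0 < delta /\
    forall x, x0 - delta < x < x0 -> Rabs (f x - l) < eps.

Definition right_lim (f : R -> R) (x0 r : R) : Prop :=
  forall eps, 0 < eps -> exists delta, 0 < delta /\
    forall x, x0 < x < x0 + delta -> Rabs (f x - r) < eps.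

Definition entropy_solution (g : R) (uI : R -> R) (u : R -> R -> R) : Prop :=
  (exists M, forall t, 0 <= t -> L1BV_bound (fun z => u z t) M) /\
  weak_sol g (fun x => 0 < x) (-1) uI u /\
  weak_sol g (fun x => x < 0) 1 uI u /\
  (forall t, 0 < t -> forall x0 l r,
     left_lim (fun z => u z t) x0 l -> right_lim (fun z => u z t) x0 r ->
     (x0 < 0 -> r <= l) /\ (0 < x0 -> l <= r)).

Definition u_case2 (g z t : R) : R :=
  if Rle_dec (Rmax 0 (/ g - t)) z then
    (if Rle_dec z (/ g) then powp ((1 - g * z) / (g * t)) (/ g) else 0)
  else 0.

(* first branch (taking priority on the overlap, where both agree):
   0 <= z <= 1/g - t, 0 <= t < 1/g  ->  (g z/(1 - g t))^{1/g};
   zero for z < 0 and otherwise. *)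
Definition u_ex (g z t : R) : R :=
  if Rlt_dec z 0 then 0 else
  if Rle_dec z (/ g - t) then
    (if Rle_dec 0 t then
       (if Rlt_dec t (/ g) then powp (g * z / (1 - g * t)) (/ g)
        else u_case2 g z t)
     else u_case2 g z t)
  else u_case2 g z t.

Definition rho (g x t : R) : R := dxi g x * u_ex g (xi g x) t.

Definition rho_case2 (g x t : R) : R :=
  if Rle_dec (Rmax 0 (powp (Rmax 0 (1 - g * t)) ((1 + g) / g) / (1 + g))) x then
    (if Rle_dec x (/ (1 + g)) then
       powp ((powp ((1 + g) * x) (- g / (1 + g)) - 1) / (g * t)) (/ g)
     else 0)
  else 0.

(* first branch: 0 < x <= (1-g t)^{(1+g)/g}/(1+g), 0 <= t < 1/g
     -> (1 - g t)^{-1/g};  zero for x <= 0 (only x <> 0 is used). *)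
Definition rho_ex (g x t : R) : R :=
  if Rle_dec x 0 then 0 else
  if Rle_dec x (powp (1 - g * t) ((1 + g) / g) / (1 + g)) then
    (if Rle_dec 0 t then
       (if Rlt_dec t (/ g) then powp (1 - g * t) (- / g)
        else rho_case2 g x t)
     else rho_case2 g x t)
  else rho_case2 g x t.

Definition improper_int0 (f : R -> R) (L : R) : Prop :=
  forall eps, 0 < eps -> exists delta, 0 < delta /\
    forall a b, 0 < a < delta -> / delta < b ->
      exists I, is_RInt f a b I /\ Rabs (I - L) < eps.

(* Main.v *)
Require Import Defs.
From Stdlib Require Import Reals Lra List Sorted.
From Coquelicot Require Import Coquelicot.
Open Scope R_scope.


Lemma powp_pos_eq x y : 0 < x -> powp x y = Rpower x y.
Proof. intros H; unfold powp; destruct (Rlt_dec 0 x); [reflexivity|lra]. Qed.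
Lemma powp_nonpos x y : x <= 0 -> powp x y = 0.
Proof. intros H; unfold powp; destruct (Rlt_dec 0 x); [lra|reflexivity]. Qed.
Lemma Rpower_pos x y : 0 < Rpower x y.
Proof. unfold Rpower; apply exp_pos. Qed.
Lemma powp_ge0 x y : 0 <= powp x y.
Proof. unfold powp; destruct (Rlt_dec 0 x); [left; apply Rpower_pos|lra]. Qed.
Lemma powp_gt0 x y : 0 < x -> 0 < powp x y.
Proof. intros H; rewrite powp_pos_eq; auto; apply Rpower_pos. Qed.
Lemma powp_1l y : powp 1 y = 1.
Proof. rewrite powp_pos_eq by lra. unfold Rpower; rewrite ln_1, Rmult_0_r; apply exp_0. Qed.
Lemma powp_1r x : 0 <= x -> powp x 1 = x.
Proof. intros H; destruct (Rle_lt_or_eq_dec 0 x H).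
 rewrite powp_pos_eq; auto; apply Rpower_1; auto. subst; apply powp_nonpos; lra. Qed.
Lemma powp_0r x : 0 < x -> powp x 0 = 1.
Proof. intros; rewrite powp_pos_eq; auto; apply Rpower_O; auto. Qed.
Lemma powp_mult x y r : 0 <= x -> 0 <= y -> powp (x*y) r = powp x r * powp y r.
Proof. intros Hx Hy.
 destruct (Rle_lt_or_eq_dec 0 x Hx) as [hx|hx]; [|subst; rewrite Rmult_0_l, !(powp_nonpos 0) by lra; ring].
 destruct (Rle_lt_or_eq_dec 0 y Hy) as [hy|hy]; [|subst; rewrite Rmult_0_r, !(powp_nonpos 0) by lra; ring].
 rewrite !powp_pos_eq; auto. rewrite Rpower_mult_distr; auto. apply Rmult_lt_0_compat; auto. Qed.
Lemma powp_powp x a b : powp (powp x a) b = powp x (a*b).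
Proof. destruct (Rlt_dec 0 x).
 rewrite (powp_pos_eq x a), (powp_pos_eq x); auto. rewrite powp_pos_eq by apply Rpower_pos. apply Rpower_mult.
 rewrite (powp_nonpos x) by lra. rewrite (powp_nonpos x) by lra. apply powp_nonpos; lra. Qed.
Lemma powp_plus x a b : powp x (a+b) = powp x a * powp x b.
Proof. destruct (Rlt_dec 0 x).
 rewrite !powp_pos_eq; auto. apply Rpower_plus.
 rewrite !powp_nonpos by lra; ring. Qed.
Lemma powp_opp x a : 0 < x -> powp x (-a) = / powp x a.
Proof. intros; rewrite !powp_pos_eq; auto. apply Rpower_Ropp. Qed.
Lemma powp_inv x a : 0 < x -> powp (/x) a = / powp x a.
Proof. intros H. rewrite !powp_pos_eq; auto. unfold Rpower. rewrite ln_Rinv; auto.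
 rewrite <- exp_Ropp. f_equal. ring. apply Rinv_0_lt_compat; auto. Qed.
Lemma powp_div x y r : 0 <= x -> 0 < y -> powp (x / y) r = powp x r / powp y r.
Proof. intros. unfold Rdiv. rewrite powp_mult; auto. rewrite powp_inv; auto.
 left; apply Rinv_0_lt_compat; auto. Qed.
Lemma powp_mono x y r : 0 <= r -> 0 <= x <= y -> powp x r <= powp y r.
Proof. intros Hr [H1 H2]. destruct (Rle_lt_or_eq_dec 0 x H1).
 rewrite !powp_pos_eq by lra. apply Rle_Rpower_l; lra.
 subst. rewrite (powp_nonpos 0) by lra. apply powp_ge0. Qed.
Lemma powp_smono x y r : 0 < r -> 0 <= x < y -> powp x r < powp y r.
Proof. intros Hr [H1 H2]. destruct (Rle_lt_or_eq_dec 0 x H1).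
 rewrite !powp_pos_eq by lra. apply Rlt_Rpower_l; lra.
 subst. rewrite (powp_nonpos 0) by lra. apply powp_gt0; lra. Qed.
Lemma powp_le1 x r : 0 <= r -> x <= 1 -> powp x r <= 1.
Proof. intros. destruct (Rle_dec x 0). rewrite powp_nonpos; lra.
 rewrite <- (powp_1l r). apply powp_mono; lra. Qed.
Lemma powp_mono_inv x y r : 0 < r -> 0 <= x -> 0 <= y -> powp x r <= powp y r -> x <= y.
Proof. intros. destruct (Rle_dec x y); auto. assert (powp y r < powp x r) by (apply powp_smono; lra). lra. Qed.
Lemma powp_inj x y r : 0 < r -> 0 <= x -> 0 <= y -> powp x r = powp y r -> x = y.
Proof. intros. apply Rle_antisym; apply (powp_mono_inv _ _ r); lra. Qed.

Lemma powp_cont r z : 0 < r -> continuity_pt (fun x => powp x r) z.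
Proof. intros Hr. destruct (Rlt_le_dec 0 z) as [hz|hz].
 - apply continuity_pt_ext_loc with (f := fun x => Rpower x r).
   exists (mkposreal z hz). intros y Hy. unfold ball in Hy; simpl in Hy; unfold AbsRing_ball, abs, minus, plus, opp in Hy; simpl in Hy.
   apply Rabs_def2 in Hy. rewrite powp_pos_eq; lra.
   apply derivable_continuous_pt. exists (r * Rpower z (r-1)). apply derivable_pt_lim_power; auto.
 - destruct (Rle_lt_or_eq_dec _ _ hz) as [hz'|hz'].
   + apply continuity_pt_ext_loc with (f := fun _ => 0).
     exists (mkposreal (-z) ltac:(lra)). intros y Hy. unfold ball in Hy; simpl in Hy; unfold AbsRing_ball, abs, minus, plus, opp in Hy; simpl in Hy.
     apply Rabs_def2 in Hy. rewrite powp_nonpos; lra.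
     apply continuity_pt_const. intros a b; auto.
   + subst z. apply continuity_pt_locally. intros eps.
     exists (mkposreal (Rpower eps (/r)) (Rpower_pos _ _)). intros y Hy.
     unfold ball in Hy; simpl in Hy; unfold AbsRing_ball, abs, minus, plus, opp in Hy; simpl in Hy.
     rewrite Ropp_0, Rplus_0_r in Hy.
     rewrite (powp_nonpos 0) by lra. rewrite Rminus_0_r, Rabs_pos_eq by apply powp_ge0.
     destruct (Rle_dec y 0). rewrite powp_nonpos; auto; apply cond_pos.
     rewrite Rabs_pos_eq in Hy by lra. rewrite powp_pos_eq by lra.
     replace (pos eps) with (Rpower (Rpower eps (/r)) r).
     apply Rlt_Rpower_l; auto. split; lra.
     rewrite Rpower_mult. rewrite Rinv_l by lra. apply Rpower_1, cond_pos.
Qed.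

Lemma powp_deriv_pos r z : 0 < z -> derivable_pt_lim (fun x => powp x r) z (r * powp z (r-1)).
Proof. intros hz. rewrite powp_pos_eq by auto. apply is_derive_Reals.
 apply is_derive_ext_loc with (f := fun x => Rpower x r).
 exists (mkposreal z hz). intros y Hy. unfold ball in Hy; simpl in Hy; unfold AbsRing_ball, abs, minus, plus, opp in Hy; simpl in Hy.
 apply Rabs_def2 in Hy. rewrite powp_pos_eq; lra.
 apply is_derive_Reals. apply derivable_pt_lim_power; auto. Qed.

Lemma powp_deriv_gt1 r z : 1 < r -> derivable_pt_lim (fun x => powp x r) z (r * powp z (r-1)).
Proof. intros Hr. destruct (Rlt_le_dec 0 z) as [hz|hz]. apply powp_deriv_pos; auto.
 rewrite (powp_nonpos z) by auto. rewrite Rmult_0_r.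
 destruct (Rle_lt_or_eq_dec _ _ hz) as [hz'|hz'].
 - apply is_derive_Reals. apply is_derive_ext_loc with (f := fun _ => 0).
   exists (mkposreal (-z) ltac:(lra)). intros y Hy. unfold ball in Hy; simpl in Hy; unfold AbsRing_ball, abs, minus, plus, opp in Hy; simpl in Hy.
   apply Rabs_def2 in Hy. rewrite powp_nonpos; lra.
   apply is_derive_Reals, derivable_pt_lim_const.
 - subst z. intros eps Heps.
   assert (C := powp_cont (r-1) 0 ltac:(lra)). rewrite continuity_pt_locally in C.
   destruct (C (mkposreal eps Heps)) as [d Hd].
   exists d. intros h hn hh. rewrite Rplus_0_l. rewrite (powp_nonpos 0) by lra.
   assert (Hd' := Hd h). unfold ball in Hd'; simpl in Hd'; unfold AbsRing_ball, abs, minus, plus, opp in Hd'; simpl in Hd'.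
   rewrite Ropp_0, Rplus_0_r in Hd'. specialize (Hd' hh). rewrite (powp_nonpos 0) in Hd' by lra.
   destruct (Rle_dec h 0). rewrite powp_nonpos by auto. replace ((0-0)/h - 0) with 0 by (field; lra). rewrite Rabs_R0; auto.
   rewrite !powp_pos_eq in * by lra. replace (r - 1) with (r + -1) in Hd' by ring.
   rewrite Rpower_plus in Hd'. change (-1) with (- (1)) in Hd'. rewrite Rpower_Ropp, Rpower_1 in Hd' by lra.
   replace ((Rpower h r - 0)/h - 0) with (Rpower h r * / h - 0) by (field; lra). rewrite ?Rminus_0_r in *. exact Hd'.
Qed.


Ltac unball H := unfold ball in H; simpl in H; unfold AbsRing_ball, abs, minus, plus, opp in H; simpl in H.

Lemma mvt_any f f' : (forall y, derivable_pt_lim f y (f' y)) ->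
  forall x u, exists z, Rabs (z - x) <= Rabs (u - x) /\ f u - f x = f' z * (u - x).
Proof. intros Hd x u. destruct (Rtotal_order x u) as [H|[H|H]].
 - destruct (MVT_cor2 f f' x u H (fun c _ => Hd c)) as [z [E Hz]]. exists z. split; auto.
   rewrite !Rabs_pos_eq by lra. lra.
 - subst. exists u. split. lra. ring.
 - destruct (MVT_cor2 f f' u x H (fun c _ => Hd c)) as [z [E Hz]]. exists z. split.
   rewrite Rabs_left1 by lra. rewrite Rabs_left1 by lra. lra. lra.
Qed.

Lemma cont2_2d F x t : cont2 F -> continuity_2d_pt F x t.
Proof. intros H eps. destruct (H x t eps (cond_pos eps)) as [d [hd Hd]].
 exists (mkposreal d hd). intros u v Hu Hv. apply Hd; auto. Qed.

Lemma cont2_1 F t x : cont2 F -> continuity_pt (fun y => F y t) x.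
Proof. intros H. apply continuity_pt_locally. intros eps.
 destruct (H x t eps (cond_pos eps)) as [d [hd Hd]]. exists (mkposreal d hd).
 intros y Hy; unball Hy. apply Hd; auto. unfold Rminus; rewrite Rplus_opp_r, Rabs_R0; auto. Qed.

Lemma cont2_2 F t x : cont2 F -> continuity_pt (fun y => F x y) t.
Proof. intros H. apply continuity_pt_locally. intros eps.
 destruct (H x t eps (cond_pos eps)) as [d [hd Hd]]. exists (mkposreal d hd).
 intros y Hy; unball Hy. apply Hd; auto. unfold Rminus; rewrite Rplus_opp_r, Rabs_R0; auto. Qed.

Lemma diff2 phi phix phit x t : C1_test phi phix phit ->
  differentiable_pt_lim phi x t (phix x t) (phit x t).
Proof. intros [Dx [Dt [Cx Ct]]] eps.
 assert (he : 0 < eps/2) by (destruct eps; simpl; lra).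
 destruct (Cx x t (eps/2) he) as [d1 [hd1 Hd1]].
 destruct (Ct x t (eps/2) he) as [d2 [hd2 Hd2]].
 exists (mkposreal (Rmin d1 d2) (Rmin_pos _ _ hd1 hd2)). intros u v Hu Hv. simpl in Hu, Hv.
 assert (Hm1 := Rmin_l d1 d2). assert (Hm2 := Rmin_r d1 d2).
 destruct (mvt_any (fun y => phi y v) (fun y => phix y v) (fun y => Dx y v) x u) as [z [Hz Ez]].
 destruct (mvt_any (fun s => phi x s) (fun s => phit x s) (fun s => Dt x s) t v) as [w [Hw Ew]].
 simpl in Ez, Ew.
 replace (phi u v - phi x t - (phix x t * (u - x) + phit x t * (v - t))) with
   ((phix z v - phix x t) * (u - x) + (phit x w - phit x t) * (v - t)) by lra.
 assert (A1 : Rabs (phix z v - phix x t) < eps/2) by (apply Hd1; lra).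
 assert (A2 : Rabs (phit x w - phit x t) < eps/2).
 { apply Hd2. unfold Rminus; rewrite Rplus_opp_r, Rabs_R0; lra. lra. }
 eapply Rle_trans. apply Rabs_triang. rewrite !Rabs_mult.
 assert (M1 := Rmax_l (Rabs (u - x)) (Rabs (v - t))). assert (M2 := Rmax_r (Rabs (u - x)) (Rabs (v - t))).
 assert (0 <= Rabs (u-x)) by apply Rabs_pos. assert (0 <= Rabs (v-t)) by apply Rabs_pos.
 assert (0 <= Rabs (phix z v - phix x t)) by apply Rabs_pos. assert (0 <= Rabs (phit x w - phit x t)) by apply Rabs_pos.
 apply Rle_trans with (eps/2 * Rabs (u - x) + eps/2 * Rabs (v-t)).
 apply Rplus_le_compat; apply Rmult_le_compat_r; lra.
 destruct eps as [e he']; simpl in *. nra.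
Qed.

Lemma chain_path phi phix phit k m s t : C1_test phi phix phit ->
  derivable_pt_lim (fun u => phi (k + s * (m - u)) u) t
    (phix (k + s*(m-t)) t * (- s) + phit (k + s*(m-t)) t).
Proof. intros H.
 replace (phix (k + s*(m-t)) t * (- s) + phit (k + s*(m-t)) t) with
  (phix (k + s*(m-t)) t * (- s) + phit (k + s*(m-t)) t * 1) by ring.
 apply (derivable_pt_lim_comp_2d phi (fun u => k + s*(m-u)) (fun u => u)).
 apply diff2; auto.
 replace (-s) with (0 + s * (0 - 1)) by ring. apply derivable_pt_lim_plus. apply derivable_pt_lim_const.
 apply derivable_pt_lim_scal. apply derivable_pt_lim_minus. apply derivable_pt_lim_const. apply derivable_pt_lim_id.
 apply derivable_pt_lim_id.
Qed.

Lemma cont2_path F k m t s : cont2 F ->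
  continuity_2d_pt (fun u v => F (k + v * (m - u)) u) t s.
Proof. intros H eps.
 destruct (H (k + s*(m-t)) t eps (cond_pos eps)) as [d [hd Hd]].
 set (B := Rabs (m - t) + Rabs s + 2).
 assert (hB : 0 < B) by (unfold B; assert (0 <= Rabs (m-t)) by apply Rabs_pos; assert (0<= Rabs s) by apply Rabs_pos; lra).
 assert (hd' : 0 < Rmin 1 (d / (2*B))). apply Rmin_pos. lra. apply Rdiv_lt_0_compat; lra.
 exists (mkposreal _ hd'). intros u v Hu Hv. simpl in Hu, Hv.
 assert (Hm1 := Rmin_l 1 (d/(2*B))). assert (Hm2 := Rmin_r 1 (d/(2*B))).
 apply Hd.
 - replace (k + v*(m-u) - (k + s*(m-t))) with ((v - s)*(m - t) + v * (t - u)) by ring.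
   eapply Rle_lt_trans. apply Rabs_triang. rewrite !Rabs_mult.
   assert (Rabs v <= Rabs s + 1). { replace v with (s + (v - s)) by ring. eapply Rle_trans. apply Rabs_triang. lra. }
   assert (0 <= Rabs (m-t)) by apply Rabs_pos. assert (0<= Rabs (v - s)) by apply Rabs_pos.
   assert (0 <= Rabs (t - u)) by apply Rabs_pos.
   assert (Rabs (t - u) = Rabs (u - t)) by apply Rabs_minus_sym.
   apply Rle_lt_trans with (Rmin 1 (d/(2*B)) * Rabs (m - t) + (Rabs s + 1) * Rmin 1 (d/(2*B))).
   apply Rplus_le_compat. apply Rmult_le_compat_r; lra. apply Rmult_le_compat; try lra. apply Rabs_pos.
   apply Rle_lt_trans with (Rmin 1 (d/(2*B)) * B). assert (0 < Rmin 1 (d/(2*B))) by exact hd'. unfold B in *. set (r := Rmin 1 _) in *. assert (0 <= Rabs s) by apply Rabs_pos. nra.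
   apply Rle_lt_trans with (d / (2*B) * B). apply Rmult_le_compat_r; lra.
   replace (d / (2*B) * B) with (d/2) by (field; lra). lra.
 - assert (d / (2*B) <= d). { assert (1 <= B) by (unfold B; assert (0 <= Rabs (m-t)) by apply Rabs_pos; assert (0<= Rabs s) by apply Rabs_pos; lra).
     apply Rmult_le_reg_r with (2*B). lra. replace (d/(2*B)*(2*B)) with d by (field; lra). nra. }
   lra.
Qed.

Lemma cont_2d_of_1_v g x y : continuity_pt g y -> continuity_2d_pt (fun u v => g v) x y.
Proof. intros H eps. rewrite continuity_pt_locally in H. destruct (H eps) as [d Hd].
 exists d. intros u v _ Hv. apply Hd. unfold ball; simpl; unfold AbsRing_ball, abs, minus, plus, opp; simpl. auto. Qed.

Lemma cont_2d_of_1_u g x y : continuity_pt g x -> continuity_2d_pt (fun u v => g u) x y.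
Proof. intros H eps. rewrite continuity_pt_locally in H. destruct (H eps) as [d Hd].
 exists d. intros u v Hu _. apply Hd. unfold ball; simpl; unfold AbsRing_ball, abs, minus, plus, opp; simpl. auto. Qed.

Lemma cont_2d_swap f x y : continuity_2d_pt f x y -> continuity_2d_pt (fun u v => f v u) y x.
Proof. intros H eps. destruct (H eps) as [d Hd]. exists d. intros u v Hu Hv. apply Hd; auto. Qed.

Lemma param_cont f a b t : a <= b ->
  (forall s, a <= s <= b -> continuity_2d_pt f s t) ->
  (forall t', ex_RInt (fun s => f s t') a b) ->
  continuity_pt (fun t' => RInt (fun s => f s t') a b) t.
Proof. intros Hab Hc Hi. apply continuity_pt_locally. intros eps.
 set (e := eps / (b - a + 1)).
 assert (he : 0 < e) by (unfold e; apply Rdiv_lt_0_compat; [apply cond_pos|lra]).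
 destruct (uniform_continuity_2d_1d f a b t Hc (mkposreal e he)) as [d Hd].
 exists d. intros t' Ht'. unball Ht'.
 assert (E : RInt (fun s => f s t' - f s t) a b = RInt (fun s => f s t') a b - RInt (fun s => f s t) a b).
 { apply (RInt_minus (V:=R_CompleteNormedModule)); auto. }
 cbv beta. rewrite <- E.
 eapply Rle_lt_trans. apply abs_RInt_le_const with (M := e); auto.
 apply (ex_RInt_minus (V := R_NormedModule)); auto.
 intros s Hs. left. apply (Hd s t s t'); try lra.
 destruct d; simpl; lra. split; apply Rabs_def2 in Ht'; lra.
 unfold Rminus; rewrite Rplus_opp_r, Rabs_R0; apply cond_pos.
 unfold e. destruct eps as [ep hep]; simpl.
 apply Rlt_le_trans with ((b - a + 1) * (ep / (b - a + 1))). apply Rmult_lt_compat_r. apply Rdiv_lt_0_compat; lra. lra.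
 right; field; lra.
Qed.


Ltac rring := match goal with |- ?a = ?b => change (@eq R a b) end; ring.

Definition ctn (f : R -> R) := forall s, continuity_pt f s.

Lemma ctn_exRInt f a b : ctn f -> ex_RInt f a b.
Proof. intros H. apply (ex_RInt_continuous (V:=R_CompleteNormedModule)). intros z _. apply continuity_pt_filterlim, H. Qed.

Lemma ctn_plus f g : ctn f -> ctn g -> ctn (fun s => f s + g s).
Proof. intros A B s. apply continuity_pt_plus; auto. Qed.
Lemma ctn_mult f g : ctn f -> ctn g -> ctn (fun s => f s * g s).
Proof. intros A B s. apply continuity_pt_mult; auto. Qed.
Lemma ctn_const c : ctn (fun _ => c).
Proof. intros s. apply continuity_pt_const. intros a b; auto. Qed.
Lemma ctn_id : ctn (fun s => s).
Proof. intros s. apply continuity_pt_id. Qed.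
Lemma ctn_comp f g : ctn f -> ctn g -> ctn (fun s => g (f s)).
Proof. intros A B s. apply (continuity_pt_comp f g s); auto. Qed.
Lemma ctn_powp r : 0 < r -> ctn (fun s => powp s r).
Proof. intros H s. apply powp_cont; auto. Qed.
Lemma ctn_affine k a : ctn (fun s => k + s * a).
Proof. apply ctn_plus. apply ctn_const. apply ctn_mult. apply ctn_id. apply ctn_const. Qed.
Lemma ctn_path F k m t : cont2 F -> ctn (fun s => F (k + s*(m-t)) t).
Proof. intros H. apply (ctn_comp (fun s => k + s*(m-t)) (fun y => F y t)). apply ctn_affine.
 intros y. apply cont2_1; auto. Qed.
Lemma ctn_phi_path phi phix phit k m t : C1_test phi phix phit -> ctn (fun s => phi (k + s*(m-t)) t).
Proof. intros [Dx _]. apply (ctn_comp (fun s => k + s*(m-t)) (fun y => phi y t)). apply ctn_affine.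
 intros y. apply derivable_continuous_pt. exists (phix y t). apply Dx. Qed.

Lemma RInt_lin2 f1 f2 c1 c2 a b : ctn f1 -> ctn f2 ->
  RInt (fun s => c1 * f1 s + c2 * f2 s) a b = c1 * RInt f1 a b + c2 * RInt f2 a b.
Proof. intros A B.
 rewrite (RInt_plus (V:=R_CompleteNormedModule) (fun s => c1 * f1 s) (fun s => c2 * f2 s)).
 2,3: apply ctn_exRInt; apply ctn_mult; auto; apply ctn_const.
 rewrite (RInt_scal (V:=R_CompleteNormedModule) f1), (RInt_scal (V:=R_CompleteNormedModule) f2); try (apply ctn_exRInt; auto).
 reflexivity. Qed.

Lemma affine_deriv k a s : derivable_pt_lim (fun s => k + s*a) s a.
Proof. assert (H1 : derivable_pt_lim (fun s => s * a) s (1*a + s*0)) by (apply (derivable_pt_lim_mult (fun s=>s) (fun _ => a)); [apply derivable_pt_lim_id| apply derivable_pt_lim_const]).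
 assert (H2 := derivable_pt_lim_plus _ _ _ _ _ (derivable_pt_lim_const k s) H1). unfold plus_fct in H2.
 replace (0 + (1*a+s*0)) with a in H2 by ring. exact H2. Qed.

Section W.
Variable g : R.
Hypothesis hg : 0 < g.
Variables phi phix phit : R -> R -> R.
Hypothesis HC : C1_test phi phix phit.

Definition Pint k m t := RInt (fun s => powp s (/g) * phi (k + s*(m-t)) t) 0 1.
Definition Tt k m t := RInt (fun s => powp s (/g) * phit (k + s*(m-t)) t) 0 1.
Definition Tx k m t := RInt (fun s => powp s (/g + 1) * phix (k + s*(m-t)) t) 0 1.

Lemma pg : 0 < /g. Proof. apply Rinv_0_lt_compat; auto. Qed.

Lemma Cx : cont2 phix. Proof. destruct HC as [_ [_ [A _]]]; auto. Qed.
Lemma Ct : cont2 phit. Proof. destruct HC as [_ [_ [_ A]]]; auto. Qed.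

Lemma powp_s_mult s : 0 <= s -> powp s (/g) * s = powp s (/g + 1).
Proof. intros H. rewrite powp_plus, powp_1r; auto. Qed.

Lemma Pint_derive (k m t : R) : is_derive (Pint k m) t (Tt k m t - Tx k m t).
Proof.
 set (f := fun u s => powp s (/g) * phi (k + s*(m-u)) u).
 set (D := fun u s => powp s (/g) * (phix (k + s*(m-u)) u * (- s) + phit (k + s*(m-u)) u)).
 assert (HD : forall u s, is_derive (fun z => f z s) u (D u s)).
 { intros u s. apply is_derive_Reals. unfold f, D. apply derivable_pt_lim_scal. apply chain_path; auto. }
 assert (HDe : forall u s, Derive (fun z => f z s) u = D u s). { intros; apply is_derive_unique, HD. }
 assert (E : Tt k m t - Tx k m t = RInt (fun s => Derive (fun u => f u s) t) 0 1).
 { rewrite (RInt_ext _ (fun s => 1 * (powp s (/g) * phit (k + s*(m-t)) t) + (-1) * (powp s (/g+1) * phix (k + s*(m-t)) t))).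
   rewrite RInt_lin2. unfold Tt, Tx; ring.
   apply ctn_mult. apply ctn_powp, pg. apply ctn_path, Ct.
   apply ctn_mult. apply ctn_powp. generalize pg; lra. apply ctn_path, Cx.
   intros s Hs. rewrite Rmin_left, Rmax_right in Hs by lra. rewrite HDe. unfold D.
   rewrite <- powp_s_mult by lra. match goal with |- ?a = ?b => change (@eq R a b) end; ring. }
 rewrite E. unfold Pint.
 apply (is_derive_RInt_param f 0 1 t).
 - exists (mkposreal 1 Rlt_0_1). intros y _ s _. exists (D y s). apply HD.
 - intros s _. apply continuity_2d_pt_ext with (f := D).
   intros; rewrite HDe; auto. unfold D.
   apply continuity_2d_pt_mult. apply cont_2d_of_1_v. apply powp_cont, pg.
   apply continuity_2d_pt_plus. apply continuity_2d_pt_mult. apply cont2_path, Cx.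
   apply continuity_2d_pt_opp, continuity_2d_pt_id2. apply cont2_path, Ct.
 - exists (mkposreal 1 Rlt_0_1). intros y _. apply ctn_exRInt. unfold f.
   apply ctn_mult. apply ctn_powp, pg. apply (ctn_phi_path phi phix phit k m y HC).
Qed.

Lemma IBP k m t : (m - t) * Tx k m t = phi (k + (m - t)) t - (/g + 1) * Pint k m t.
Proof.
 set (F := fun s => powp s (/g + 1) * phi (k + s*(m-t)) t).
 set (dF := fun s => (/g + 1) * (powp s (/g) * phi (k + s*(m-t)) t) + (m - t) * (powp s (/g+1) * phix (k + s*(m-t)) t)).
 assert (H : is_RInt dF 0 1 (minus (F 1) (F 0))).
 { apply (is_RInt_derive (V:=R_CompleteNormedModule)).
   - intros x _. apply is_derive_Reals. unfold F, dF.
     assert (A1 := powp_deriv_gt1 (/g+1) x ltac:(generalize pg; lra)).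
     assert (A2 : derivable_pt_lim (fun s => phi (k + s*(m-t)) t) x (phix (k + x*(m-t)) t * (m - t))).
     { apply (derivable_pt_lim_comp (fun s => k + s*(m-t)) (fun y => phi y t) x (m-t)).
       apply affine_deriv. destruct HC as [Dx _]; apply Dx. }
     assert (A3 := derivable_pt_lim_mult _ _ _ _ _ A1 A2). unfold mult_fct in A3.
     replace (/ g + 1 - 1) with (/g) in A3 by ring.
     replace ((/g + 1) * (powp x (/g) * phi (k + x*(m-t)) t) + (m - t) * (powp x (/g+1) * phix (k + x*(m-t)) t))
       with ((/ g + 1) * powp x (/ g) * phi (k + x * (m - t)) t + powp x (/ g + 1) * (phix (k + x * (m - t)) t * (m - t))) by ring.
     exact A3.
   - intros x _. apply continuity_pt_filterlim. unfold dF. revert x.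
     apply ctn_plus; apply ctn_mult; try apply ctn_const.
     apply ctn_mult. apply ctn_powp, pg. apply (ctn_phi_path phi phix phit k m t HC).
     apply ctn_mult. apply ctn_powp; generalize pg; lra. apply ctn_path, Cx. }
 apply (is_RInt_unique (V:=R_CompleteNormedModule)) in H. unfold dF in H.
 rewrite RInt_lin2 in H.
 2: apply ctn_mult; [apply ctn_powp, pg| apply (ctn_phi_path phi phix phit k m t HC)].
 2: apply ctn_mult; [apply ctn_powp; generalize pg; lra| apply ctn_path, Cx].
 unfold F, minus, plus, opp in H; simpl in H.
 rewrite powp_1l, (powp_nonpos 0) in H by lra.
 unfold Tx, Pint. replace (k + 1 * (m - t)) with (k + (m-t)) in H by ring. lra.
Qed.

Definition hX k m t s := powp s (/g) * phit (k + s*(m-t)) t + (-1) * flux g (powp s (/g)) * phix (k + s*(m-t)) t.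
Definition Kf t := (/g - t) * Pint 0 (/g) t + t * Pint (/g) 0 t.
Definition Gt t := (/g - t) * RInt (hX 0 (/g) t) 0 1 + t * RInt (hX (/g) 0 t) 0 1.

Lemma flux_powp s : flux g (powp s (/g)) = / (1+g) * powp s (/g + 1).
Proof. unfold flux. rewrite powp_powp. f_equal. f_equal. field. lra. Qed.

Lemma hX_RInt k m t : RInt (hX k m t) 0 1 = Tt k m t - / (1+g) * Tx k m t.
Proof. rewrite (RInt_ext _ (fun s => 1 * (powp s (/g) * phit (k + s*(m-t)) t) + (- / (1+g)) * (powp s (/g+1) * phix (k + s*(m-t)) t))).
 rewrite RInt_lin2. unfold Tt, Tx; rring.
 apply ctn_mult. apply ctn_powp, pg. apply ctn_path, Ct.
 apply ctn_mult. apply ctn_powp. generalize pg; lra. apply ctn_path, Cx.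
 intros s _. unfold hX. rewrite flux_powp. match goal with |- ?a = ?b => change (@eq R a b) end; ring. Qed.

Lemma Kf_derive (t : R) : is_derive Kf t (Gt t).
Proof.
 assert (H1 : is_derive (fun t => (/g - t) * Pint 0 (/g) t) t (-1 * Pint 0 (/g) t + (/g - t) * (Tt 0 (/g) t - Tx 0 (/g) t))).
 { apply is_derive_Reals. apply (derivable_pt_lim_mult (fun t => /g - t) (Pint 0 (/g))).
   replace (-1) with (0 - 1) by ring. apply derivable_pt_lim_minus. apply derivable_pt_lim_const. apply derivable_pt_lim_id.
   apply is_derive_Reals, Pint_derive. }
 assert (H2 : is_derive (fun t => t * Pint (/g) 0 t) t (1 * Pint (/g) 0 t + t * (Tt (/g) 0 t - Tx (/g) 0 t))).
 { apply is_derive_Reals. apply (derivable_pt_lim_mult (fun t => t) (Pint (/g) 0)).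
   apply derivable_pt_lim_id. apply is_derive_Reals, Pint_derive. }
 assert (H3 := is_derive_plus _ _ _ _ _ H1 H2). unfold Kf.
 match type of H3 with is_derive _ _ ?v => replace (Gt t) with v; [exact H3|] end.
 unfold Gt. rewrite !hX_RInt.
 assert (I1 := IBP 0 (/g) t). assert (I2 := IBP (/g) 0 t).
 replace (0 + (/g - t)) with (/g - t) in I1 by ring. replace (/g + (0 - t)) with (/g - t) in I2 by ring.
 unfold plus; simpl.
 set (pa := Pint 0 (/g) t) in *. set (pb := Pint (/g) 0 t) in *.
 set (xa := Tx 0 (/g) t) in *. set (xb := Tx (/g) 0 t) in *.
 set (c := phi (/g - t) t) in *.
 assert (E1 : (/g - t) * xa = c - (/g+1) * pa) by exact I1.
 assert (E2 : (0 - t) * xb = c - (/g+1) * pb) by exact I2.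
 assert (gne : g <> 0) by lra. assert (g1 : 1 + g <> 0) by lra.
 replace ((/ g - t) * (Tt 0 (/ g) t - / (1 + g) * xa)) with ((/ g - t) * Tt 0 (/ g) t - / (1 + g) * ((/g - t) * xa)) by ring.
 replace (t * (Tt (/ g) 0 t - / (1 + g) * xb)) with (t * Tt (/ g) 0 t + / (1 + g) * ((0 - t) * xb)) by ring.
 replace (-1 * pa + (/ g - t) * (Tt 0 (/ g) t - xa) + (1 * pb + t * (Tt (/ g) 0 t - xb)))
   with (-1 * pa + (/ g - t) * Tt 0 (/ g) t - (/g - t) * xa + (1 * pb + t * Tt (/ g) 0 t + (0 - t) * xb)) by ring.
 rewrite E1, E2. field. split; auto.
Qed.

Lemma Gt_cont t : continuity_pt Gt t.
Proof. unfold Gt.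
 assert (C : forall k m, continuity_pt (fun t => RInt (hX k m t) 0 1) t).
 { intros k m. apply (param_cont (fun s t => hX k m t s) 0 1 t). lra.
   - intros s _. apply (cont_2d_swap (fun u v => hX k m u v)). unfold hX.
     apply continuity_2d_pt_plus. apply continuity_2d_pt_mult.
     apply cont_2d_of_1_v, powp_cont, pg. apply cont2_path, Ct.
     apply continuity_2d_pt_mult. apply continuity_2d_pt_mult. apply continuity_2d_pt_const.
     apply cont_2d_of_1_v. apply (ctn_comp (fun s => powp s (/g)) (flux g)). apply ctn_powp, pg.
     unfold flux. apply ctn_mult. apply ctn_const. apply ctn_powp; lra.
     apply cont2_path, Cx.
   - intros t'. apply ctn_exRInt. unfold hX. apply ctn_plus. apply ctn_mult. apply ctn_powp, pg. apply ctn_path, Ct.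
     apply ctn_mult. apply ctn_mult. apply ctn_const. apply (ctn_comp (fun s => powp s (/g)) (flux g)). apply ctn_powp, pg.
     unfold flux. apply ctn_mult. apply ctn_const. apply ctn_powp; lra. apply ctn_path, Cx. }
 apply continuity_pt_plus; apply continuity_pt_mult; auto.
 apply continuity_pt_minus. apply continuity_pt_const; intros a b; auto. apply continuity_pt_id.
 apply continuity_pt_id.
Qed.

Lemma FTC_K T : is_RInt Gt 0 T (Kf T - Kf 0).
Proof. apply (is_RInt_derive (V:=R_CompleteNormedModule) Kf Gt).
 intros x _. apply Kf_derive. intros x _. apply continuity_pt_filterlim, Gt_cont. Qed.
End W.


Lemma cis_to_is f a b v : RInt.is_RInt f a b v -> Defs.is_RInt f a b v.
Proof. intros H. assert (E : ex_RInt f a b) by (exists v; exact H).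
 exists (ex_RInt_Reals_0 f a b E). rewrite <- RInt_Reals.
 apply (is_RInt_unique (V:=R_CompleteNormedModule)); auto. Qed.

Lemma is_RInt_zero X l r : (forall x, Rmin l r < x < Rmax l r -> X x = 0) -> RInt.is_RInt X l r 0.
Proof. intros H. apply (is_RInt_ext (V:=R_NormedModule) (fun _ => 0)). intros x Hx; symmetry; auto.
 assert (Hc := is_RInt_const (V:=R_NormedModule) l r 0).
 unfold scal in Hc; simpl in Hc; unfold mult in Hc; simpl in Hc; rewrite Rmult_0_r in Hc. exact Hc. Qed.

Lemma supp X a b lo hi (V : R) :
 (forall x, x < a -> X x = 0) -> (forall x, b < x -> X x = 0) ->
 (forall x, x < lo -> X x = 0) -> (forall x, hi < x -> X x = 0) ->
 lo <= hi -> a < b -> RInt.is_RInt X lo hi V -> RInt.is_RInt X a b V.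
Proof. intros Za Zb Zl Zh Hlh Hab HV.
 set (M0 := Rmin a lo). set (M1 := Rmax b hi).
 assert (h0a : M0 <= a) by apply Rmin_l. assert (h0l : M0 <= lo) by apply Rmin_r.
 assert (h1b : b <= M1) by apply Rmax_l. assert (h1h : hi <= M1) by apply Rmax_r.
 assert (A1 : RInt.is_RInt X M0 lo 0). { apply is_RInt_zero. intros x Hx. rewrite Rmin_left, Rmax_right in Hx by lra. apply Zl; lra. }
 assert (A2 : RInt.is_RInt X hi M1 0). { apply is_RInt_zero. intros x Hx. rewrite Rmin_left, Rmax_right in Hx by lra. apply Zh; lra. }
 assert (A3 := is_RInt_Chasles _ _ _ _ _ _ (is_RInt_Chasles _ _ _ _ _ _ A1 HV) A2).
 assert (Ex : ex_RInt X M0 M1) by (eexists; exact A3).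
 assert (Ex2 : ex_RInt X M0 b) by (apply (ex_RInt_Chasles_1 X M0 b M1); auto; lra).
 assert (Ex3 : ex_RInt X a b) by (apply (ex_RInt_Chasles_2 X M0 a b); auto; lra).
 assert (B1 : RInt.is_RInt X M0 a 0). { apply is_RInt_zero. intros x Hx. rewrite Rmin_left, Rmax_right in Hx by lra. apply Za; lra. }
 assert (B2 : RInt.is_RInt X b M1 0). { apply is_RInt_zero. intros x Hx. rewrite Rmin_left, Rmax_right in Hx by lra. apply Zb; lra. }
 assert (B3 := is_RInt_Chasles _ _ _ _ _ _ (is_RInt_Chasles _ _ _ _ _ _ B1 (RInt_correct _ _ _ Ex3)) B2).
 apply (is_RInt_unique (V:=R_CompleteNormedModule)) in A3. apply (is_RInt_unique (V:=R_CompleteNormedModule)) in B3.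
 unfold plus in A3, B3; simpl in A3, B3. replace V with (RInt X a b) by lra. apply (RInt_correct (V:=R_CompleteNormedModule)); auto.
Qed.

Lemma subst Y k d L : (d <> 0 -> RInt.is_RInt (fun s => Y (k + s*d)) 0 1 L) -> RInt.is_RInt Y k (k + d) (d * L).
Proof. intros H. destruct (Req_dec d 0) as [->|hd].
 - replace (k+0) with k by ring. replace (0 * L) with (@zero R_NormedModule) by (unfold zero; simpl; ring). apply is_RInt_point.
 - specialize (H hd).
   assert (H1 : RInt.is_RInt (fun s => Y (k + s*d)) (/d * k + (- k / d)) (/d * (k + d) + (- k/d)) L).
   { replace (/d * k + (- k / d)) with 0 by (field; auto). replace (/d * (k + d) + (- k/d)) with 1 by (field; auto). exact H. }
   apply (is_RInt_comp_lin (V:=R_NormedModule)) in H1.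
   apply (is_RInt_scal (V:=R_NormedModule) _ _ _ d) in H1.
   eapply (is_RInt_ext (V:=R_NormedModule)). 2: exact H1.
   intros x _. unfold scal; simpl; unfold mult; simpl. replace (k + (/ d * x + - k / d) * d) with x by (field; auto). field; auto.
Qed.

Lemma flux0 g : flux g 0 = 0.
Proof. unfold flux. rewrite powp_nonpos by lra. ring. Qed.

Section U.
Variable g : R.
Hypothesis hg : 0 < g.

Lemma UE_neg x t : x < 0 -> u_ex g x t = 0.
Proof. intros H; unfold u_ex. destruct (Rlt_dec x 0); [reflexivity|lra]. Qed.

Lemma UE_big x t : 0 <= t -> / g < x -> u_ex g x t = 0.
Proof. intros H1 H2. assert (0 < /g) by (apply Rinv_0_lt_compat; lra). unfold u_ex, u_case2.
 destruct (Rlt_dec x 0); [reflexivity|].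
 destruct (Rle_dec x (/g - t)); [lra|].
 destruct (Rle_dec (Rmax 0 (/g - t)) x); [|reflexivity]. destruct (Rle_dec x (/g)); [lra|reflexivity]. Qed.

Lemma UE1 s t : 0 <= t < /g -> 0 <= s <= 1 -> u_ex g (0 + s * (/g - t)) t = powp s (/g).
Proof. intros [h1 h2] [s1 s2]. unfold u_ex.
 assert (0 <= s * (/g - t)) by (apply Rmult_le_pos; lra).
 destruct (Rlt_dec (0 + s * (/g - t)) 0); [lra|].
 destruct (Rle_dec (0 + s * (/ g - t)) (/g - t)). 2: { exfalso. apply n0. assert (s * (/g - t) <= 1 * (/g - t)) by (apply Rmult_le_compat_r; lra). lra. }
 destruct (Rle_dec 0 t); [|lra]. destruct (Rlt_dec t (/g)); [|lra].
 f_equal. assert (g * t < 1). { apply Rmult_lt_reg_l with (/g). apply Rinv_0_lt_compat; lra. rewrite <- Rmult_assoc, Rinv_l; lra. }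
 replace (g * (0 + s * (/g - t))) with (s * (1 - g*t)) by (field; lra). field. lra. Qed.

Lemma UE2 s t : 0 < t -> 0 < s < 1 -> 0 <= /g + s * (0 - t) -> u_ex g (/g + s * (0 - t)) t = powp s (/g).
Proof. intros h [s1 s2] h3. unfold u_ex.
 destruct (Rlt_dec (/g + s * (0 - t)) 0); [lra|].
 assert (s * t < t) by (rewrite <- (Rmult_1_l t) at 2; apply Rmult_lt_compat_r; lra).
 destruct (Rle_dec (/g + s * (0 - t)) (/g - t)); [lra|]. unfold u_case2.
 destruct (Rle_dec (Rmax 0 (/g - t)) (/g + s * (0 - t))). 2: { exfalso; match goal with H : ~ _ |- _ => apply H end. apply Rmax_lub; lra. }
 destruct (Rle_dec (/g + s * (0 - t)) (/g)). 2: { exfalso; match goal with H : ~ (_ <= / g) |- _ => apply H end. assert (0 < s*t) by (apply Rmult_lt_0_compat; lra). lra. }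
 f_equal. field. lra. Qed.
End U.


Lemma datum g (hg : 0 < g) z : u_I g (fI_ex g) z =
     (if Rle_dec 0 z then (if Rle_dec z (/ g) then powp (g * z) (/ g) else 0) else 0).
Proof. unfold u_I, fI_ex, sgn.
 assert (hig : 0 < /g) by (apply Rinv_0_lt_compat; lra).
 assert (hi1 : 0 < / (1+g)) by (apply Rinv_0_lt_compat; lra).
 destruct (Rlt_dec 0 z) as [hz|hz].
 - rewrite Rabs_pos_eq by lra. rewrite Rmult_1_l.
   assert (P := powp_ge0 (g*z) ((1+g)/g)).
   destruct (Rle_dec 0 (/ (1 + g) * powp (g * z) ((1 + g) / g))) as [_|c]. 2: { exfalso; apply c; apply Rmult_le_pos; lra. }
   destruct (Rle_dec 0 z); [|lra].
   destruct (Rle_dec z (/g)) as [h|h].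
   + destruct (Rle_dec (/ (1 + g) * powp (g * z) ((1 + g) / g)) (/ (1 + g))) as [_|c]. ring.
     exfalso; apply c. rewrite <- (Rmult_1_r (/(1+g))) at 2. apply Rmult_le_compat_l. lra.
     apply powp_le1. apply Rlt_le, Rdiv_lt_0_compat; lra.
     apply Rmult_le_reg_l with (/g); auto. rewrite <- Rmult_assoc, Rinv_l; lra.
   + destruct (Rle_dec (/ (1 + g) * powp (g * z) ((1 + g) / g)) (/ (1 + g))) as [c|_]; [|ring].
     exfalso. assert (1 < g * z). { apply Rmult_lt_reg_l with (/g); auto. rewrite <- Rmult_assoc, Rinv_l; lra. }
     assert (powp 1 ((1+g)/g) < powp (g*z) ((1+g)/g)) by (apply powp_smono; [apply Rdiv_lt_0_compat|]; lra).
     rewrite powp_1l in H0. nra.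
 - destruct (Rlt_dec z 0) as [hz'|hz'].
   + rewrite (Rabs_left z hz'). destruct (Rle_dec 0 z); [lra|].
     assert (P := powp_gt0 (g * - z) ((1+g)/g) ltac:(nra)).
     destruct (Rle_dec 0 (-1 * (/ (1 + g) * powp (g * - z) ((1 + g) / g)))); [|ring].
     exfalso. nra.
   + assert (z = 0) by lra. subst z. rewrite Rabs_R0, Rmult_0_r, powp_nonpos by lra.
     destruct (Rle_dec 0 0); [|lra]. destruct (Rle_dec 0 (/g)); [|lra]. ring.
Qed.

Lemma vanish_dx phi phix phit a b T x t : C1_test phi phix phit ->
  (forall x t, (x < a \/ b < x \/ T < t) -> phi x t = 0) -> (x < a \/ b < x) -> phix x t = 0.
Proof. intros [Dx _] Hv Hx.
 assert (H : is_derive (fun _ => 0) x (phix x t)).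
 { apply (is_derive_ext_loc (fun y => phi y t)).
   destruct Hx as [Hx|Hx].
   exists (mkposreal (a - x) ltac:(lra)). intros y Hy; unball Hy. apply Rabs_def2 in Hy. apply Hv; lra.
   exists (mkposreal (x - b) ltac:(lra)). intros y Hy; unball Hy. apply Rabs_def2 in Hy. apply Hv; lra.
   apply is_derive_Reals, Dx. }
 apply is_derive_unique in H. rewrite Derive_const in H. auto.
Qed.

Lemma vanish_dt phi phix phit a b T x t : C1_test phi phix phit ->
  (forall x t, (x < a \/ b < x \/ T < t) -> phi x t = 0) -> (x < a \/ b < x) -> phit x t = 0.
Proof. intros [_ [Dt _]] Hv Hx.
 assert (H : is_derive (fun _ => 0) t (phit x t)).
 { apply (is_derive_ext_loc (fun s => phi x s)).
   exists (mkposreal 1 Rlt_0_1). intros y Hy. apply Hv; tauto.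
   apply is_derive_Reals, Dt. }
 apply is_derive_unique in H. rewrite Derive_const in H. auto.
Qed.

Lemma vanish_T phi phix phit a b T x : C1_test phi phix phit ->
  (forall x t, (x < a \/ b < x \/ T < t) -> phi x t = 0) -> phi x T = 0.
Proof. intros [_ [Dt _]] Hv.
 assert (C : continuity_pt (fun s => phi x s) T) by (apply derivable_continuous_pt; exists (phit x T); apply Dt).
 destruct (Req_dec (phi x T) 0) as [E|E]; auto. exfalso.
 rewrite continuity_pt_locally in C. destruct (C (mkposreal (Rabs (phi x T)) (Rabs_pos_lt _ E))) as [d Hd].
 assert (B : ball T d (T + d/2)). { unfold ball; simpl; unfold AbsRing_ball, abs, minus, plus, opp; simpl.
   replace (T + d/2 + - T) with (d/2) by ring. rewrite Rabs_pos_eq; destruct d; simpl; lra. }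
 specialize (Hd _ B). simpl in Hd. rewrite Hv in Hd by (right; right; destruct d; simpl; lra).
 rewrite Rminus_0_l, Rabs_Ropp in Hd. lra.
Qed.


Lemma hX_ctn g phi phix phit k m t : 0 < g -> C1_test phi phix phit -> ctn (hX g phix phit k m t).
Proof. intros hg HC. assert (pg : 0 < /g) by (apply Rinv_0_lt_compat; lra).
 destruct HC as [_ [_ [Cx Ct]]]. unfold hX. apply ctn_plus. apply ctn_mult. apply ctn_powp; auto. apply ctn_path; auto.
 apply ctn_mult. apply ctn_mult. apply ctn_const. apply (ctn_comp (fun s => powp s (/g)) (flux g)). apply ctn_powp; auto.
 unfold flux. apply ctn_mult. apply ctn_const. apply ctn_powp; lra. apply ctn_path; auto. Qed.

Lemma weak_pos g (hg : 0 < g) : weak_sol g (fun x => 0 < x) (-1) (u_I g (fI_ex g)) (u_ex g).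
Proof.
 intros phi phix phit a b T HC hab hT HD Hv.
 assert (ha : 0 < a) by (apply HD; lra).
 assert (pg : 0 < /g) by (apply Rinv_0_lt_compat; lra).
 assert (Hpi : forall k m, Pint g phi k m T = 0).
 { intros k m. unfold Pint. rewrite (RInt_ext _ (fun _ => 0)).
   rewrite RInt_const. unfold scal; simpl; unfold mult; simpl; rring.
   intros s _. rewrite (vanish_T phi phix phit a b T); auto. rring. }
 assert (KT : Kf g phi T = 0) by (unfold Kf; rewrite !Hpi; ring).
 exists (Gt g phix phit), (Kf g phi T - Kf g phi 0), (Kf g phi 0).
 split; [|split; [|split]].
 - intros t [ht0 htT]. apply cis_to_is.
   set (X := fun x => u_ex g x t * phit x t + -1 * flux g (u_ex g x t) * phix x t).
   assert (Zab : forall x, (x < a \/ b < x) -> X x = 0).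
   { intros x Hx. unfold X. rewrite (vanish_dt phi phix phit a b T x t), (vanish_dx phi phix phit a b T x t); auto. ring. }
   assert (Zneg : forall x, x < 0 -> X x = 0).
   { intros x Hx. unfold X. rewrite UE_neg, flux0 by auto. ring. }
   apply (supp X a b 0 (/g)); [intros x Hx; apply Zab; auto|intros x Hx; apply Zab; auto|exact Zneg| |lra|lra|].
   intros x Hx. unfold X. rewrite UE_big, flux0 by (auto; lra). ring.
   set (LA := RInt (hX g phix phit 0 (/g) t) 0 1). set (LB := RInt (hX g phix phit (/g) 0 t) 0 1).
   assert (A1 : RInt.is_RInt X 0 (0 + (/g - t)) ((/g - t) * LA)).
   { apply subst. intros hd. apply (is_RInt_ext (V:=R_NormedModule) (hX g phix phit 0 (/g) t)).
     2: { apply (RInt_correct (V:=R_CompleteNormedModule)). apply ctn_exRInt, (hX_ctn g phi phix phit); auto. }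
     intros s Hs. rewrite Rmin_left, Rmax_right in Hs by lra. unfold hX, X.
     destruct (Rlt_dec t (/g)) as [hlt|hge].
     - rewrite UE1; auto; lra.
     - assert (0 + s * (/g - t) < 0). { assert (t > /g) by lra. assert (s * (/g - t) < 0) by (apply Rmult_pos_neg; lra). lra. }
       rewrite UE_neg, flux0 by auto.
       rewrite (vanish_dt phi phix phit a b T _ t), (vanish_dx phi phix phit a b T _ t); auto; try (left; lra); rring. }
   assert (A2 : RInt.is_RInt X (/g) (/g + - t) (- t * LB)).
   { apply subst. intros hd. apply (is_RInt_ext (V:=R_NormedModule) (hX g phix phit (/g) 0 t)).
     2: { apply (RInt_correct (V:=R_CompleteNormedModule)). apply ctn_exRInt, (hX_ctn g phi phix phit); auto. }
     intros s Hs. rewrite Rmin_left, Rmax_right in Hs by lra. unfold hX, X.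
     replace (/g + s * - t) with (/g + s * (0 - t)) by ring.
     destruct (Rle_dec 0 (/g + s * (0 - t))) as [hp|hn].
     - rewrite UE2; auto; lra.
     - rewrite UE_neg, flux0 by lra.
       rewrite (vanish_dt phi phix phit a b T _ t), (vanish_dx phi phix phit a b T _ t); auto; try (left; lra); rring. }
   apply (is_RInt_swap (V:=R_NormedModule)) in A2.
   replace (0 + (/g - t)) with (/g + - t) in A1 by ring.
   assert (A3 := is_RInt_Chasles _ _ _ _ _ _ A1 A2).
   replace (Gt g phix phit t) with (plus ((/ g - t) * LA) (opp (- t * LB))). exact A3.
   unfold Gt, plus, opp; simpl. fold LA LB. ring.
 - apply cis_to_is. apply FTC_K; auto.
 - apply cis_to_is.
   set (Y := fun x => u_I g (fI_ex g) x * phi x 0).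
   assert (Zab : forall x, (x < a \/ b < x) -> Y x = 0).
   { intros x Hx. unfold Y. rewrite Hv by tauto. ring. }
   apply (supp Y a b 0 (/g)); [intros x Hx; apply Zab; auto|intros x Hx; apply Zab; auto| | |lra|lra|].
   intros x Hx. unfold Y. rewrite datum by auto. destruct (Rle_dec 0 x); [lra|ring].
   intros x Hx. unfold Y. rewrite datum by auto. destruct (Rle_dec 0 x); [|ring]. destruct (Rle_dec x (/g)); [lra|ring].
   assert (A1 : RInt.is_RInt Y 0 (0 + /g) (/g * Pint g phi 0 (/g) 0)).
   { apply subst. intros _. unfold Pint. apply (is_RInt_ext (V:=R_NormedModule) (fun s => powp s (/g) * phi (0 + s * (/g - 0)) 0)).
     2: { apply (RInt_correct (V:=R_CompleteNormedModule)). apply ctn_exRInt. apply ctn_mult. apply ctn_powp; auto.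
          apply (ctn_phi_path phi phix phit 0 (/g) 0 HC). }
     intros s Hs. rewrite Rmin_left, Rmax_right in Hs by lra. unfold Y. rewrite datum by auto.
     replace (/g - 0) with (/g) by ring.
     destruct (Rle_dec 0 (0 + s * /g)). 2: { exfalso. assert (0 < s * /g) by (apply Rmult_lt_0_compat; lra). lra. }
     destruct (Rle_dec (0 + s * /g) (/g)). 2: { exfalso. assert (s * /g <= 1 * /g) by (apply Rmult_le_compat_r; lra). lra. }
     replace (g * (0 + s * /g)) with s by (field; lra). reflexivity. }
   replace (0 + /g) with (/g) in A1 by ring.
   replace (Kf g phi 0) with (/ g * Pint g phi 0 (/ g) 0). exact A1. unfold Kf. ring.
 - rewrite KT. ring.
Qed.

Lemma weak_neg g (hg : 0 < g) : weak_sol g (fun x => x < 0) 1 (u_I g (fI_ex g)) (u_ex g).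
Proof.
 intros phi phix phit a b T HC hab hT HD Hv.
 exists (fun _ => 0), 0, 0. split; [|split; [|split]].
 - intros t _. apply cis_to_is. apply (is_RInt_ext (V:=R_NormedModule) (fun _ => 0)).
   intros x Hx. rewrite Rmin_left, Rmax_right in Hx by lra. rewrite UE_neg, flux0 by (apply HD; lra). rring.
   apply is_RInt_zero. auto.
 - apply cis_to_is. apply is_RInt_zero. auto.
 - apply cis_to_is. apply (is_RInt_ext (V:=R_NormedModule) (fun _ => 0)).
   intros x Hx. rewrite Rmin_left, Rmax_right in Hx by lra. rewrite datum by auto.
   destruct (Rle_dec 0 x). assert (x < 0) by (apply HD; lra). lra. rring.
   apply is_RInt_zero. auto.
 - ring.
Qed.


Lemma powp_mono' x y r : 0 <= r -> x <= y -> powp x r <= powp y r.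
Proof. intros. destruct (Rle_dec x 0). rewrite powp_nonpos by auto. apply powp_ge0. apply powp_mono; lra. Qed.

Section U2.
Variable g : R.
Hypothesis hg : 0 < g.
Lemma pg' : 0 < /g. Proof. apply Rinv_0_lt_compat; auto. Qed.
Lemma gt_lt t : t < /g -> g * t < 1.
Proof. intros. apply Rmult_lt_reg_l with (/g). apply pg'. rewrite <- Rmult_assoc, Rinv_l; lra. Qed.

Lemma UF1 x t : 0 <= t < /g -> 0 <= x <= /g - t -> u_ex g x t = powp (g*x/(1-g*t)) (/g).
Proof. intros [h1 h2] [x1 x2]. unfold u_ex.
 destruct (Rlt_dec x 0); [lra|]. destruct (Rle_dec x (/g - t)); [|lra].
 destruct (Rle_dec 0 t); [|lra]. destruct (Rlt_dec t (/g)); [reflexivity|lra]. Qed.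

Lemma UF2 x t : 0 < t -> 0 <= x -> (/g - t < x \/ /g <= t) -> u_ex g x t = powp ((1-g*x)/(g*t)) (/g).
Proof. intros h1 hx hc. assert (pg := pg'). unfold u_ex.
 assert (C2 : u_case2 g x t = powp ((1-g*x)/(g*t)) (/g)).
 { unfold u_case2. destruct (Rle_dec (Rmax 0 (/g - t)) x) as [r|r].
   - destruct (Rle_dec x (/g)); [reflexivity|]. rewrite powp_nonpos; auto.
     unfold Rdiv. apply Rmult_le_0_r. assert (g * x > g * /g) by (apply Rmult_lt_compat_l; lra).
     rewrite Rinv_r in H by lra. lra. left; apply Rinv_0_lt_compat; nra.
   - exfalso. apply r. apply Rmax_lub; lra. }
 destruct (Rlt_dec x 0); [lra|]. destruct (Rle_dec x (/g - t)); auto.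
 destruct (Rle_dec 0 t); [|lra]. destruct (Rlt_dec t (/g)); auto. lra. Qed.

Lemma UF0 x : 0 <= x -> u_ex g x 0 = if Rle_dec x (/g) then powp (g*x) (/g) else 0.
Proof. intros hx. assert (pg := pg'). destruct (Rle_dec x (/g)).
 rewrite UF1 by lra. f_equal. field. apply UE_big; auto; lra. Qed.

Lemma u_bounds x t : 0 <= t -> 0 <= u_ex g x t <= 1.
Proof. intros ht. assert (pg := pg').
 destruct (Rlt_dec x 0). rewrite UE_neg; lra.
 destruct (Rlt_dec (/g) x). rewrite UE_big; lra.
 split. unfold u_ex, u_case2. repeat match goal with |- context [if ?c then _ else _] => destruct c end; try lra; apply powp_ge0.
 destruct (Rle_dec x (/g - t)) as [h|h].
 - assert (t < /g \/ (t = /g /\ x = 0)) as [h'|[-> ->]] by lra.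
   + rewrite UF1 by lra. apply powp_le1. apply Rlt_le, pg. assert (H9 := gt_lt t h').
     apply Rmult_le_reg_r with (1 - g*t). lra. unfold Rdiv. rewrite Rmult_assoc, Rinv_l by lra.
     assert (HH : g * x <= g * (/g - t)) by (apply Rmult_le_compat_l; lra).
     replace (g * (/g - t)) with (1 - g*t) in HH by (field; lra). lra.
   + rewrite UF2 by lra. apply powp_le1. apply Rlt_le, pg. right. field. lra.
 - rewrite UF2 by lra. apply powp_le1. apply Rlt_le, pg.
   assert (Ht0 : 0 < t). { destruct (Req_dec t 0); [subst; lra|lra]. }
   apply Rmult_le_reg_r with (g*t). nra. unfold Rdiv. rewrite Rmult_assoc, Rinv_l by nra.
   assert (HH : g * (/g - t) < g * x) by (apply Rmult_lt_compat_l; lra).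
   replace (g * (/g - t)) with (1 - g*t) in HH by (field; lra). lra.
Qed.

Definition pk t := Rmax 0 (/g - t).

Lemma u_incr x y t : 0 <= t -> x <= y -> y <= pk t -> u_ex g x t <= u_ex g y t.
Proof. intros ht hxy hy. assert (pg := pg'). unfold pk in hy.
 destruct (Rlt_dec x 0). rewrite UE_neg by auto. apply u_bounds; auto.
 destruct (Rlt_dec t (/g)).
 - rewrite Rmax_right in hy by lra. rewrite !UF1 by lra. apply powp_mono. lra.
   assert (H9 := gt_lt t r). split. apply Rmult_le_pos. nra. left; apply Rinv_0_lt_compat; lra.
   unfold Rdiv. apply Rmult_le_compat_r. left; apply Rinv_0_lt_compat; lra. nra.
 - rewrite Rmax_left in hy by lra. assert (x = y) by lra. subst; lra.
Qed.

Lemma u_decr x y t : 0 <= t -> pk t <= x -> x <= y -> u_ex g y t <= u_ex g x t.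
Proof. intros ht hx hxy. assert (pg := pg'). unfold pk in hx.
 assert (h0 : 0 <= x) by (eapply Rle_trans; [apply Rmax_l|exact hx]).
 assert (h1 : /g - t <= x) by (eapply Rle_trans; [apply Rmax_r|exact hx]).
 destruct (Req_dec t 0) as [->|htn].
 - rewrite !UF0 by lra. destruct (Rle_dec y (/g)). destruct (Rle_dec x (/g)); [|lra].
   assert (x = /g) by lra. assert (y = /g) by lra. subst; lra.
   destruct (Rle_dec x (/g)); [apply powp_ge0|lra].
 - assert (0 < t) by lra.
   destruct (Rlt_dec t (/g)) as [r|r]; [destruct (Req_dec x (/g - t)) as [e|e]|].
   + assert (HH : u_ex g x t = 1). { rewrite UF1 by lra. rewrite e. replace (g * (/g - t) / (1 - g*t)) with 1. apply powp_1l.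
         assert (H9 := gt_lt t r). field. lra. }
     rewrite HH. apply u_bounds; lra.
   + rewrite !UF2 by lra. apply powp_mono'. apply Rlt_le, pg.
     unfold Rdiv. apply Rmult_le_compat_r. left; apply Rinv_0_lt_compat; nra. nra.
   + rewrite !UF2 by lra. apply powp_mono'. apply Rlt_le, pg.
     unfold Rdiv. apply Rmult_le_compat_r. left; apply Rinv_0_lt_compat; nra. nra.
Qed.
End U2.


Lemma var_unimodal f p : (forall x, 0 <= f x <= 1) ->
  (forall x y, x <= y -> y <= p -> f x <= f y) ->
  (forall x y, p <= x -> x <= y -> f y <= f x) ->
  forall l, Sorted Rlt l -> var_list f l <= 2.
Proof. intros B I D.
 set (Bd := fun x => if Rle_dec x p then 2 - f x else f x).
 assert (K : forall l x, Sorted Rlt (x :: l) -> var_list f (x :: l) <= Bd x).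
 { induction l as [|y l IH]; intros x Hs.
   - simpl. unfold Bd. destruct (Rle_dec x p); specialize (B x); lra.
   - inversion Hs as [|? ? Hs' Hh]; subst. inversion Hh; subst.
     change (var_list f (x :: y :: l)) with (Rabs (f y - f x) + var_list f (y :: l)).
     specialize (IH y Hs'). unfold Bd in *.
     assert (Bx := B x). assert (By := B y).
     destruct (Rle_dec y p); destruct (Rle_dec x p); try lra.
     + assert (f x <= f y) by (apply I; lra). rewrite Rabs_pos_eq by lra. lra.
     + apply Rle_trans with (Rabs (f y - f x) + f y). lra.
       destruct (Rle_dec (f x) (f y)). rewrite Rabs_pos_eq by lra. lra. rewrite Rabs_left by lra. lra.
     + assert (f y <= f x) by (apply D; lra). rewrite Rabs_left1 by lra. lra. }
 intros [|x l] Hs. simpl; lra.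
 eapply Rle_trans. apply K; auto. unfold Bd. destruct (Rle_dec x p); specialize (B x); lra.
Qed.

Lemma left_lim_cont f x0 l : left_lim f x0 l -> continuity_pt f x0 -> l = f x0.
Proof. intros L C. destruct (Req_dec l (f x0)) as [E|E]; auto. exfalso.
 set (e := Rabs (l - f x0) / 2). assert (he : 0 < e) by (unfold e; apply Rdiv_lt_0_compat; [apply Rabs_pos_lt; lra|lra]).
 destruct (L e he) as [d1 [hd1 H1]].
 rewrite continuity_pt_locally in C. destruct (C (mkposreal e he)) as [d2 H2].
 set (d := Rmin d1 d2). assert (hd : 0 < d) by (apply Rmin_pos; [lra|apply cond_pos]).
 assert (A := H1 (x0 - d/2)). assert (Bd := H2 (x0 - d/2)).
 assert (m1 := Rmin_l d1 d2). assert (m2 := Rmin_r d1 d2). fold d in m1, m2.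
 assert (A' : Rabs (f (x0 - d/2) - l) < e) by (apply A; lra).
 assert (B' : Rabs (f (x0 - d/2) - f x0) < e).
 { apply Bd. unfold ball; simpl; unfold AbsRing_ball, abs, minus, plus, opp; simpl.
   replace (x0 - d/2 + - x0) with (-(d/2)) by ring. rewrite Rabs_Ropp, Rabs_pos_eq; lra. }
 assert (Rabs (l - f x0) <= Rabs (f (x0 - d/2) - l) + Rabs (f (x0 - d/2) - f x0)).
 { replace (l - f x0) with (-(f (x0 - d/2) - l) + (f (x0 - d/2) - f x0)) by ring.
   eapply Rle_trans. apply Rabs_triang. rewrite Rabs_Ropp. lra. }
 unfold e in *. lra.
Qed.

Lemma right_lim_cont f x0 r : right_lim f x0 r -> continuity_pt f x0 -> r = f x0.
Proof. intros L C. destruct (Req_dec r (f x0)) as [E|E]; auto. exfalso.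
 set (e := Rabs (r - f x0) / 2). assert (he : 0 < e) by (unfold e; apply Rdiv_lt_0_compat; [apply Rabs_pos_lt; lra|lra]).
 destruct (L e he) as [d1 [hd1 H1]].
 rewrite continuity_pt_locally in C. destruct (C (mkposreal e he)) as [d2 H2].
 set (d := Rmin d1 d2). assert (hd : 0 < d) by (apply Rmin_pos; [lra|apply cond_pos]).
 assert (A := H1 (x0 + d/2)). assert (Bd := H2 (x0 + d/2)).
 assert (m1 := Rmin_l d1 d2). assert (m2 := Rmin_r d1 d2). fold d in m1, m2.
 assert (A' : Rabs (f (x0 + d/2) - r) < e) by (apply A; lra).
 assert (B' : Rabs (f (x0 + d/2) - f x0) < e).
 { apply Bd. unfold ball; simpl; unfold AbsRing_ball, abs, minus, plus, opp; simpl.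
   replace (x0 + d/2 + - x0) with (d/2) by ring. rewrite Rabs_pos_eq; lra. }
 assert (Rabs (r - f x0) <= Rabs (f (x0 + d/2) - r) + Rabs (f (x0 + d/2) - f x0)).
 { replace (r - f x0) with (-(f (x0 + d/2) - r) + (f (x0 + d/2) - f x0)) by ring.
   eapply Rle_trans. apply Rabs_triang. rewrite Rabs_Ropp. lra. }
 unfold e in *. lra.
Qed.

Lemma glue_cont f f1 f2 c : (forall x, x <= c -> f x = f1 x) -> (forall x, c <= x -> f x = f2 x) ->
  continuity_pt f1 c -> continuity_pt f2 c -> continuity_pt f c.
Proof. intros E1 E2 C1 C2. rewrite continuity_pt_locally in *. intros eps.
 destruct (C1 eps) as [d1 H1]. destruct (C2 eps) as [d2 H2].
 exists (mkposreal _ (Rmin_pos _ _ (cond_pos d1) (cond_pos d2))). intros y Hy.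
 assert (Hy1 : ball c d1 y). { unfold ball in *; simpl in *; unfold AbsRing_ball in *. eapply Rlt_le_trans. exact Hy. apply Rmin_l. }
 assert (Hy2 : ball c d2 y). { unfold ball in *; simpl in *; unfold AbsRing_ball in *. eapply Rlt_le_trans. exact Hy. apply Rmin_r. }
 assert (e12 : f1 c = f2 c). { rewrite <- (E1 c) by lra. rewrite <- (E2 c) by lra. reflexivity. }
 rewrite (E1 c) by lra. destruct (Rle_dec y c). rewrite E1 by auto. apply H1; auto.
 rewrite E2 by lra. rewrite e12. apply H2; auto. Qed.

Lemma loc_cont f f1 c d : 0 < d -> (forall x, c - d < x < c + d -> f x = f1 x) -> continuity_pt f1 c -> continuity_pt f c.
Proof. intros hd E C. apply continuity_pt_ext_loc with f1; auto.
 exists (mkposreal d hd). intros y Hy; unball Hy. apply Rabs_def2 in Hy. symmetry; apply E; lra. Qed.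

Section C.
Variable g : R.
Hypothesis hg : 0 < g.

Lemma u_cont t x0 : 0 < t -> x0 <> 0 -> continuity_pt (fun z => u_ex g z t) x0.
Proof. intros ht hx. assert (pg := pg' g hg).
 assert (c1 : continuity_pt (fun z => powp (g*z/(1-g*t)) (/g)) x0).
 { apply (ctn_comp (fun z => g*z/(1-g*t)) (fun y => powp y (/g))). unfold Rdiv.
   apply ctn_mult. apply ctn_mult. apply ctn_const. apply ctn_id. apply ctn_const. apply ctn_powp; auto. }
 assert (c2 : forall y, continuity_pt (fun z => powp ((1-g*z)/(g*t)) (/g)) y).
 { apply (ctn_comp (fun z => (1-g*z)/(g*t)) (fun y => powp y (/g))). unfold Rdiv.
   apply ctn_mult. apply (ctn_plus (fun _ => 1) (fun z => - (g * z))). apply ctn_const.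
   intros s; apply continuity_pt_opp. apply ctn_mult. apply ctn_const. apply ctn_id. apply ctn_const. apply ctn_powp; auto. }
 destruct (Rlt_dec x0 0) as [hn|hp].
 - apply (loc_cont _ (fun _ => 0) x0 (-x0)). lra. intros x Hx. apply UE_neg; lra. apply ctn_const.
 - assert (hp' : 0 < x0) by lra.
   destruct (Rtotal_order x0 (/g - t)) as [h|[h|h]].
   + apply (loc_cont _ (fun z => powp (g*z/(1-g*t)) (/g)) x0 (Rmin x0 (/g - t - x0))).
     apply Rmin_pos; lra. intros x Hx. assert (m1 := Rmin_l x0 (/g - t - x0)). assert (m2 := Rmin_r x0 (/g - t - x0)).
     apply UF1; auto; lra. auto.
   + assert (tl : t < /g) by lra.
     apply (loc_cont _ (fun z => if Rle_dec z (/g - t) then powp (g*z/(1-g*t)) (/g) else powp ((1-g*z)/(g*t)) (/g)) x0 x0); auto.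
     intros x Hx. destruct (Rle_dec x (/g - t)). apply UF1; auto; lra. apply UF2; auto; lra.
     apply (glue_cont _ (fun z => powp (g*z/(1-g*t)) (/g)) (fun z => powp ((1-g*z)/(g*t)) (/g))); auto.
     intros x Hx; destruct (Rle_dec x (/g - t)); [auto|lra].
     intros x Hx; destruct (Rle_dec x (/g - t)); auto. assert (x = /g - t) by lra. subst x.
     assert (H9 := gt_lt g hg t tl). replace (g * (/g - t) / (1 - g*t)) with 1 by (field; lra).
     replace ((1 - g * (/g - t)) / (g*t)) with 1 by (field; lra). reflexivity.
   + apply (loc_cont _ (fun z => powp ((1-g*z)/(g*t)) (/g)) x0 (Rmin x0 (x0 - (/g - t)))).
     apply Rmin_pos; lra. intros x Hx. assert (m1 := Rmin_l x0 (x0 - (/g - t))). assert (m2 := Rmin_r x0 (x0 - (/g - t))).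
     apply UF2; auto; lra. auto.
Qed.

Lemma oleinik t : 0 < t -> forall x0 l r,
     left_lim (fun z => u_ex g z t) x0 l -> right_lim (fun z => u_ex g z t) x0 r ->
     (x0 < 0 -> r <= l) /\ (0 < x0 -> l <= r).
Proof. intros ht x0 l r L Rr.
 split; intros hx; assert (C := u_cont t x0 ht ltac:(lra));
 rewrite (left_lim_cont _ _ _ L C), (right_lim_cont _ _ _ Rr C); lra. Qed.
End C.


Lemma ex_ext f f1 a b : a <= b -> (forall x, a < x < b -> f x = f1 x) -> ctn f1 -> ex_RInt f a b.
Proof. intros hab E C. apply (ex_RInt_ext (V:=R_CompleteNormedModule) f1).
 intros x Hx. rewrite Rmin_left, Rmax_right in Hx by lra. symmetry; auto. apply ctn_exRInt; auto. Qed.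

Section L.
Variable g : R.
Hypothesis hg : 0 < g.

Lemma ctn_u1 t : ctn (fun z => powp (g*z/(1-g*t)) (/g)).
Proof. apply (ctn_comp (fun z => g*z/(1-g*t)) (fun y => powp y (/g))). unfold Rdiv.
 apply ctn_mult. apply ctn_mult. apply ctn_const. apply ctn_id. apply ctn_const. apply ctn_powp, pg'; auto. Qed.
Lemma ctn_u2 t : ctn (fun z => powp ((1-g*z)/(g*t)) (/g)).
Proof. apply (ctn_comp (fun z => (1-g*z)/(g*t)) (fun y => powp y (/g))). unfold Rdiv.
 apply ctn_mult. apply (ctn_plus (fun _ => 1) (fun z => - (g * z))). apply ctn_const.
 intros s; apply continuity_pt_opp. apply ctn_mult. apply ctn_const. apply ctn_id. apply ctn_const. apply ctn_powp, pg'; auto. Qed.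

Lemma u_ex01 t : 0 <= t -> ex_RInt (fun z => u_ex g z t) 0 (/g).
Proof. intros ht. assert (pg := pg' g hg).
 destruct (Req_dec t 0) as [->|htn].
 - apply (ex_ext _ (fun z => powp (g*z/(1-g*0)) (/g))). lra. intros x Hx. apply UF1; auto; lra. apply ctn_u1.
 - destruct (Rlt_dec t (/g)) as [tl|tl].
   + apply (ex_RInt_Chasles (V:=R_CompleteNormedModule) _ _ (/g - t)).
     apply (ex_ext _ (fun z => powp (g*z/(1-g*t)) (/g))). lra. intros x Hx. apply UF1; auto; lra. apply ctn_u1.
     apply (ex_ext _ (fun z => powp ((1-g*z)/(g*t)) (/g))). lra. intros x Hx. apply UF2; auto; lra. apply ctn_u2.
   + apply (ex_ext _ (fun z => powp ((1-g*z)/(g*t)) (/g))). lra. intros x Hx. apply UF2; auto; lra. apply ctn_u2.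
Qed.

Lemma L1_part t a b : 0 <= t -> a < b ->
  exists I, Defs.is_RInt (fun z => Rabs (u_ex g z t)) a b I /\ I <= /g.
Proof. intros ht hab. assert (pg := pg' g hg).
 set (h := fun z => u_ex g z t).
 set (L := Rmin a 0). set (R0 := Rmax b (/g)).
 assert (hLa : L <= a) by apply Rmin_l. assert (hL0 : L <= 0) by apply Rmin_r.
 assert (hbR : b <= R0) by apply Rmax_l. assert (hgR : /g <= R0) by apply Rmax_r.
 assert (Z1 : RInt.is_RInt h L 0 0). { apply is_RInt_zero. intros x Hx. rewrite Rmin_left, Rmax_right in Hx by lra. apply UE_neg; lra. }
 assert (Z2 : RInt.is_RInt h (/g) R0 0). { apply is_RInt_zero. intros x Hx. rewrite Rmin_left, Rmax_right in Hx by lra. apply UE_big; auto; lra. }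
 assert (E1 := u_ex01 t ht). fold h in E1.
 assert (EL : ex_RInt h L R0).
 { apply (ex_RInt_Chasles (V:=R_CompleteNormedModule) _ _ 0). eexists; exact Z1.
   apply (ex_RInt_Chasles (V:=R_CompleteNormedModule) _ _ (/g)). auto. eexists; exact Z2. }
 assert (Eab : ex_RInt h a b).
 { apply (ex_RInt_Chasles_2 h L a b). lra. apply (ex_RInt_Chasles_1 h L b R0). lra. auto. }
 assert (hpos : forall z, 0 <= h z) by (intros z; apply u_bounds; auto).
 exists (RInt h a b). split.
 - apply cis_to_is. apply (is_RInt_ext (V:=R_NormedModule) h). intros x _. unfold h. rewrite Rabs_pos_eq; auto. apply hpos.
   apply (RInt_correct (V:=R_CompleteNormedModule)); auto.
 - assert (ELa : ex_RInt h L a) by (apply (ex_RInt_Chasles_1 h L a R0); [lra|auto]).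
   assert (EbR : ex_RInt h b R0) by (apply (ex_RInt_Chasles_2 h L b R0); [lra|auto]).
   assert (ELb : ex_RInt h L b) by (apply (ex_RInt_Chasles_1 h L b R0); [lra|auto]).
   assert (C1 := RInt_Chasles (V:=R_CompleteNormedModule) h L a b ELa Eab).
   assert (C2 := RInt_Chasles (V:=R_CompleteNormedModule) h L b R0 ELb EbR).
   assert (E0R : ex_RInt h 0 R0) by (apply (ex_RInt_Chasles (V:=R_CompleteNormedModule) _ _ (/g)); [auto|eexists; exact Z2]).
   assert (C3 := RInt_Chasles (V:=R_CompleteNormedModule) h L 0 R0 (ex_intro _ _ Z1) E0R).
   assert (C4 := RInt_Chasles (V:=R_CompleteNormedModule) h 0 (/g) R0 E1 (ex_intro _ _ Z2)).
   apply (is_RInt_unique (V:=R_CompleteNormedModule)) in Z1. apply (is_RInt_unique (V:=R_CompleteNormedModule)) in Z2.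
   unfold plus in C1, C2, C3, C4; simpl in C1, C2, C3, C4.
   assert (P1 : 0 <= RInt h L a) by (apply RInt_ge_0; auto).
   assert (P2 : 0 <= RInt h b R0) by (apply RInt_ge_0; auto).
   assert (B : RInt h 0 (/g) <= (/g - 0) * 1).
   { eapply Rle_trans. apply Rle_abs. apply abs_RInt_le_const; auto. lra.
     intros z _. rewrite Rabs_pos_eq by apply hpos. apply u_bounds; auto. }
   lra.
Qed.

Lemma L1BV t : 0 <= t -> L1BV_bound (fun z => u_ex g z t) (2 + /g).
Proof. intros ht. assert (pg := pg' g hg). split.
 - intros a b hab. destruct (L1_part t a b ht hab) as [I [H1 H2]]. exists I; split; auto; lra.
 - intros l Hl. eapply Rle_trans. apply (var_unimodal _ (pk g t)); auto.
   intros x; apply u_bounds; auto. intros x y; apply u_incr; auto. intros x y; apply u_decr; auto. lra.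
Qed.
End L.


Lemma lin_deriv c x : derivable_pt_lim (fun y => c*y) x c.
Proof. assert (H := derivable_pt_lim_scal id c x 1 (derivable_pt_lim_id x)). unfold mult_real_fct, id in H.
 rewrite Rmult_1_r in H. exact H. Qed.

Section X.
Variable g : R.
Hypothesis hg : 0 < g.

Definition xip x := / g * powp ((1 + g) * x) (g / (1 + g)).

Lemma xi_pos x : 0 < x -> xi g x = xip x.
Proof. intros H. unfold xi, xip, sgn. destruct (Rlt_dec 0 x); [|lra]. rewrite Rabs_pos_eq by lra. ring. Qed.
Lemma xi_neg x : x < 0 -> xi g x = - xip (-x).
Proof. intros H. unfold xi, xip, sgn. destruct (Rlt_dec 0 x); [lra|]. destruct (Rlt_dec x 0); [|lra].
 rewrite Rabs_left by lra. ring. Qed.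

Lemma xip_pos x : 0 < x -> 0 < xip x.
Proof. intros. unfold xip. apply Rmult_lt_0_compat. apply Rinv_0_lt_compat; lra. apply powp_gt0. nra. Qed.

Lemma xip_deriv x : 0 < x -> derivable_pt_lim xip x (powp ((1+g)*x) (- / (1+g))).
Proof. intros hx. unfold xip.
 assert (D := derivable_pt_lim_comp (fun y => (1+g)*y) (fun s => powp s (g/(1+g))) x (1+g) _
   (lin_deriv (1+g) x)
   (powp_deriv_pos (g/(1+g)) ((1+g)*x) ltac:(nra))).
 apply (derivable_pt_lim_scal _ (/g)) in D. unfold comp, mult_real_fct in D.
 replace (powp ((1 + g) * x) (- / (1 + g))) with (/ g * (g / (1 + g) * powp ((1 + g) * x) (g / (1 + g) - 1) * (1 + g))).
 exact D. replace (g / (1 + g) - 1) with (- / (1+g)) by (field; lra). field. lra.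
Qed.

Lemma xi_deriv x : x <> 0 -> derivable_pt_lim (xi g) x (dxi g x).
Proof. intros hx. unfold dxi. destruct (Rlt_dec 0 x) as [p|p].
 - rewrite Rabs_pos_eq by lra. apply is_derive_Reals.
   apply (is_derive_ext_loc xip). exists (mkposreal x p). intros y Hy; unball Hy. apply Rabs_def2 in Hy. symmetry; apply xi_pos; lra.
   apply is_derive_Reals, xip_deriv; auto.
 - rewrite Rabs_left by lra. apply is_derive_Reals.
   apply (is_derive_ext_loc (fun y => - xip (-y))). exists (mkposreal (-x) ltac:(lra)). intros y Hy; unball Hy. apply Rabs_def2 in Hy. symmetry; apply xi_neg; lra.
   apply is_derive_Reals.
   assert (D := derivable_pt_lim_comp (fun y => -y) xip x (-1) _ ltac:(replace (-1) with (- (1)) by ring; apply derivable_pt_lim_opp, derivable_pt_lim_id) (xip_deriv (-x) ltac:(lra))).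
   apply derivable_pt_lim_opp in D. unfold comp, opp_fct in D. replace (powp ((1 + g) * - x) (- / (1 + g))) with (- (powp ((1 + g) * - x) (- / (1 + g)) * -1)) by ring. exact D.
Qed.

Lemma rho_neg x t : x < 0 -> 0 <= t -> rho g x t = 0.
Proof. intros hx ht. unfold rho. rewrite UE_neg. ring. rewrite xi_neg by auto. assert (0 < xip (-x)) by (apply xip_pos; lra). lra. Qed.
End X.


Section R4.
Variable g : R.
Hypothesis hg : 0 < g.

Lemma F3 s w : 0 < s -> 0 < w -> (s <= powp w ((1+g)/g) <-> powp s (g/(1+g)) <= w).
Proof. intros hs hw. split; intros H.
 - replace w with (powp (powp w ((1+g)/g)) (g/(1+g))). apply powp_mono. apply Rlt_le, Rdiv_lt_0_compat; lra. lra.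
   rewrite powp_powp. replace ((1 + g) / g * (g / (1 + g))) with 1 by (field; lra). apply powp_1r; lra.
 - replace s with (powp (powp s (g/(1+g))) ((1+g)/g)). apply powp_mono. apply Rlt_le, Rdiv_lt_0_compat; lra.
   split; auto. apply powp_ge0.
   rewrite powp_powp. replace (g / (1 + g) * ((1 + g) / g)) with 1 by (field; lra). apply powp_1r; lra.
Qed.

Lemma rho_pos x t : 0 < x -> 0 <= t -> rho g x t = rho_ex g x t.
Proof. intros hx ht. assert (pg := pg' g hg).
 set (s := (1+g)*x). assert (hs : 0 < s) by (unfold s; nra).
 set (Y := powp s (g/(1+g))). assert (hY : 0 < Y) by (apply powp_gt0; auto).
 assert (Xi : xi g x = Y / g) by (rewrite xi_pos by auto; unfold xip; fold s; fold Y; field; lra).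
 assert (Dx : dxi g x = powp Y (- /g)).
 { unfold dxi. rewrite Rabs_pos_eq by lra. fold s. unfold Y. rewrite powp_powp. f_equal. field. lra. }
 assert (Sm : powp s (- g / (1 + g)) = / Y).
 { unfold Y. rewrite <- powp_opp by auto. f_equal. field. lra. }
 assert (Th : forall w, 0 < w -> (x <= powp w ((1+g)/g) / (1+g) <-> Y <= w)).
 { intros w hw. unfold Y. rewrite <- (F3 s w hs hw). unfold s. set (P := powp w ((1+g)/g)). split; intros H.
   - replace P with ((1+g) * (P/(1+g))) by (field; lra). apply Rmult_le_compat_l; lra.
   - replace x with (((1+g)*x) * /(1+g)) by (field; lra). unfold Rdiv. apply Rmult_le_compat_r; auto. left; apply Rinv_0_lt_compat; lra. }
 assert (Th1 : x <= / (1+g) <-> Y <= 1). { rewrite <- Th by lra. rewrite powp_1l. unfold Rdiv; rewrite Rmult_1_l. tauto. }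
 set (B1 := powp (1 - g*t) ((1+g)/g) / (1+g)).
 assert (B1' : powp (Rmax 0 (1 - g*t)) ((1+g)/g) / (1+g) = B1).
 { unfold B1. destruct (Rle_dec (1 - g*t) 0). rewrite Rmax_left by auto. rewrite !powp_nonpos by lra. reflexivity.
   rewrite Rmax_right by lra. reflexivity. }
 assert (B1ge : 0 <= B1) by (unfold B1; apply Rmult_le_pos; [apply powp_ge0|left; apply Rinv_0_lt_compat; lra]).
 unfold rho, rho_ex, rho_case2. fold s. rewrite Xi, Dx, Sm. fold B1. rewrite B1'.
 destruct (Rle_dec x 0); [lra|].
 destruct (Rle_dec Y (1 - g*t)) as [A|A].
 - assert (tl : t < /g). { apply Rmult_lt_reg_l with g; auto. rewrite Rinv_r by lra. lra. }
   assert (xB : x <= B1) by (apply Th; lra).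
   destruct (Rle_dec x B1); [|lra]. destruct (Rle_dec 0 t); [|lra]. destruct (Rlt_dec t (/g)); [|lra].
   rewrite UF1; auto. 2: { split. apply Rlt_le, Rdiv_lt_0_compat; lra.
     apply Rmult_le_reg_l with g; auto. replace (g * (Y/g)) with Y by (field; lra). replace (g * (/g - t)) with (1 - g*t) by (field; lra). lra. }
   replace (g * (Y / g) / (1 - g * t)) with (Y / (1 - g*t)) by (field; lra).
   rewrite powp_div by lra. rewrite !powp_opp by lra. field. split; apply Rgt_not_eq, powp_gt0; lra.
 - assert (xB : ~ x <= B1).
   { intros H. destruct (Rle_dec (1 - g*t) 0). unfold B1 in H. rewrite powp_nonpos in H by auto. lra.
     apply A. apply (proj1 (Th (1 - g*t) ltac:(lra))). exact H. }
   assert (C2 : Rmax 0 B1 <= x) by (apply Rmax_lub; lra).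
   assert (R2 : (if Rle_dec x B1 then (if Rle_dec 0 t then (if Rlt_dec t (/g) then powp (1 - g*t) (- /g)
        else (if Rle_dec (Rmax 0 B1) x then (if Rle_dec x (/(1+g)) then powp ((/Y - 1)/(g*t)) (/g) else 0) else 0))
        else (if Rle_dec (Rmax 0 B1) x then (if Rle_dec x (/(1+g)) then powp ((/Y - 1)/(g*t)) (/g) else 0) else 0))
        else (if Rle_dec (Rmax 0 B1) x then (if Rle_dec x (/(1+g)) then powp ((/Y - 1)/(g*t)) (/g) else 0) else 0))
       = (if Rle_dec x (/(1+g)) then powp ((/Y - 1)/(g*t)) (/g) else 0)).
   { destruct (Rle_dec x B1); [lra|]. destruct (Rle_dec (Rmax 0 B1) x); [reflexivity|lra]. }
   rewrite R2.
   destruct (Rle_dec x (/(1+g))) as [X1|X1].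
   + assert (Y1 : Y <= 1) by (apply Th1; auto).
     assert (htp : 0 < t). { destruct (Req_dec t 0); [subst; rewrite Rmult_0_r in A; lra|lra]. }
     rewrite UF2; auto. 2: apply Rlt_le, Rdiv_lt_0_compat; lra.
     2: { left. apply Rmult_lt_reg_l with g; auto. replace (g * (Y/g)) with Y by (field; lra). replace (g * (/g - t)) with (1 - g*t) by (field; lra). lra. }
     replace (g * (Y / g)) with Y by (field; lra).
     replace ((/ Y - 1) / (g * t)) with (((1 - Y)/(g*t)) * / Y) by (field; split; lra).
     rewrite powp_mult. rewrite powp_inv by auto. rewrite powp_opp by auto. ring.
     apply Rmult_le_pos. lra. left; apply Rinv_0_lt_compat; nra. left; apply Rinv_0_lt_compat; lra.
   + assert (Y1 : ~ Y <= 1) by (intro H; apply X1, Th1, H).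
     rewrite UE_big; auto. ring. apply Rmult_lt_reg_l with g; auto. replace (g * (Y/g)) with Y by (field; lra). rewrite Rinv_r; lra.
Qed.
End R4.


Ltac toR := match goal with |- ?a = ?b => change (@eq R a b) end.

Lemma ftc F f a b : a <= b -> (forall x, is_derive F x (f x)) -> ctn f -> RInt.is_RInt f a b (F b - F a).
Proof. intros hab D C. apply (is_RInt_derive (V:=R_CompleteNormedModule)). intros; apply D.
 intros x _. apply continuity_pt_filterlim, C. Qed.

Lemma two_piece f F1 F2 f1 f2 c a b : a <= b ->
  (forall x, is_derive F1 x (f1 x)) -> (forall x, is_derive F2 x (f2 x)) -> ctn f1 -> ctn f2 ->
  (forall x, a < x < b -> x < c -> f x = f1 x) -> (forall x, a < x < b -> c < x -> f x = f2 x) ->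
  (a <= c -> F1 c = F2 c) ->
  RInt.is_RInt f a b ((if Rle_dec b c then F1 b else F2 b) - (if Rle_dec a c then F1 a else F2 a)).
Proof. intros hab D1 D2 C1 C2 E1 E2 Eq.
 destruct (Rlt_dec c a) as [ca|ca].
 - destruct (Rle_dec b c); [lra|]. destruct (Rle_dec a c); [lra|].
   apply (is_RInt_ext (V:=R_NormedModule) f2). intros x Hx. rewrite Rmin_left, Rmax_right in Hx by lra. symmetry; apply E2; lra.
   apply ftc; auto.
 - specialize (Eq ltac:(lra)). destruct (Rle_dec a c); [|lra].
   destruct (Rle_dec b c) as [bc|bc].
   + apply (is_RInt_ext (V:=R_NormedModule) f1). intros x Hx. rewrite Rmin_left, Rmax_right in Hx by lra. symmetry; apply E1; lra.
     apply ftc; auto.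
   + assert (A1 : RInt.is_RInt f a c (F1 c - F1 a)).
     { apply (is_RInt_ext (V:=R_NormedModule) f1). intros x Hx. rewrite Rmin_left, Rmax_right in Hx by lra. symmetry; apply E1; lra.
       apply ftc; auto; lra. }
     assert (A2 : RInt.is_RInt f c b (F2 b - F2 c)).
     { apply (is_RInt_ext (V:=R_NormedModule) f2). intros x Hx. rewrite Rmin_left, Rmax_right in Hx by lra. symmetry; apply E2; lra.
       apply ftc; auto; lra. }
     assert (A3 := is_RInt_Chasles _ _ _ _ _ _ A1 A2). unfold plus in A3; simpl in A3.
     replace (F2 b - F1 a) with (F1 c - F1 a + (F2 b - F2 c)) by (rewrite Eq; ring). exact A3.
Qed.

Lemma powp_cont_pos r z : 0 < z -> continuity_pt (fun x => powp x r) z.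
Proof. intros. apply derivable_continuous_pt. exists (r * powp z (r-1)). apply powp_deriv_pos; auto. Qed.

Lemma RInt_unique' (f : R -> R) a b (v : R) : RInt.is_RInt f a b v -> RInt f a b = v.
Proof. apply (is_RInt_unique (V:=R_CompleteNormedModule)). Qed.

Lemma deriv_powp_lin k m r x : 1 < r -> derivable_pt_lim (fun y => powp (k + m*y) r) x (r * powp (k + m*x) (r-1) * m).
Proof. intros hr.
 assert (D := derivable_pt_lim_comp (fun y => k + y*m) (fun s => powp s r) x m _ (affine_deriv k m x) (powp_deriv_gt1 r (k + x*m) hr)).
 unfold comp in D. replace (k + m*x) with (k + x*m) by ring.
 apply (derivable_pt_lim_ext _ _ _ _ (fun y => f_equal (fun z => powp z r) (Rplus_eq_compat_l k _ _ (Rmult_comm y m)))) in D.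
 rewrite Rmult_comm in D. replace (r * powp (k + x * m) (r - 1) * m) with (m * (r * powp (k + x * m) (r - 1))) by ring. exact D.
Qed.

Section I.
Variable g : R.
Hypothesis hg : 0 < g.
Variable t : R.
Hypothesis ht : 0 < t.

Definition F1 z := powp (1 - g*t) (-/g) * powp (0 + g*z) (/g + 1) / (1+g).
Definition f1 z := powp (1 - g*t) (-/g) * powp (g*z) (/g).
Definition F2 z := (1 - powp (g*t) (-/g) * powp (1 + (-g)*z) (/g + 1)) / (1+g).
Definition f2 z := powp (g*t) (-/g) * powp (1 - g*z) (/g).
Definition GW z := if Rle_dec z (/g - t) then F1 z else F2 z.

Lemma pg2 : 0 < /g. Proof. apply Rinv_0_lt_compat; auto. Qed.

Lemma F1_der x : is_derive F1 x (f1 x).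
Proof. apply is_derive_Reals. unfold F1, f1.
 assert (D := deriv_powp_lin 0 g (/g+1) x ltac:(generalize pg2; lra)).
 apply (derivable_pt_lim_scal _ (powp (1 - g*t) (-/g))) in D. apply (derivable_pt_lim_scal _ (/(1+g))) in D.
 unfold mult_real_fct in D.
 apply (derivable_pt_lim_ext _ _ _ _ (fun y => eq_sym (Rmult_comm _ _))) in D.
 replace (/g + 1 - 1) with (/g) in D by ring. replace (0 + g*x) with (g*x) in D by ring.
 replace (powp (1 - g * t) (- / g) * powp (g * x) (/ g)) with (/ (1 + g) * (powp (1 - g * t) (- / g) * ((/ g + 1) * powp (g * x) (/ g) * g))) by (field; lra).
 eapply derivable_pt_lim_ext. 2: exact D. intros y. unfold Rdiv. ring.
Qed.

Lemma F2_der x : is_derive F2 x (f2 x).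
Proof. apply is_derive_Reals. unfold F2, f2.
 assert (D := deriv_powp_lin 1 (-g) (/g+1) x ltac:(generalize pg2; lra)).
 apply (derivable_pt_lim_scal _ (powp (g*t) (-/g))) in D.
 assert (D2 := derivable_pt_lim_minus _ _ _ _ _ (derivable_pt_lim_const 1 x) D).
 apply (derivable_pt_lim_scal _ (/(1+g))) in D2.
 unfold mult_real_fct, minus_fct in D2.
 replace (/g + 1 - 1) with (/g) in D2 by ring. replace (1 + - g * x) with (1 - g*x) in D2 by ring.
 replace (powp (g * t) (- / g) * powp (1 - g * x) (/ g)) with (/ (1 + g) * (0 - powp (g * t) (- / g) * ((/ g + 1) * powp (1 - g * x) (/ g) * - g))) by (field; lra).
 eapply derivable_pt_lim_ext. 2: exact D2. intros y. unfold fct_cte. unfold Rdiv. ring.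
Qed.

Lemma ctn_f1 : ctn f1.
Proof. unfold f1. apply ctn_mult. apply ctn_const. apply (ctn_comp (fun z => g*z) (fun y => powp y (/g))).
 apply ctn_mult. apply ctn_const. apply ctn_id. apply ctn_powp, pg2. Qed.
Lemma ctn_f2 : ctn f2.
Proof. unfold f2. apply ctn_mult. apply ctn_const. apply (ctn_comp (fun z => 1 - g*z) (fun y => powp y (/g))).
 apply (ctn_plus (fun _ => 1) (fun z => - (g*z))). apply ctn_const. intros s; apply continuity_pt_opp.
 apply ctn_mult. apply ctn_const. apply ctn_id. apply ctn_powp, pg2. Qed.

Lemma u_int a b : 0 < a <= b -> RInt.is_RInt (fun z => u_ex g z t) a b (GW b - GW a).
Proof. intros [ha hab]. assert (pg := pg2). unfold GW.
 apply two_piece with f1 f2; auto. apply F1_der. apply F2_der. apply ctn_f1. apply ctn_f2.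
 - intros x Hx Hc. rewrite UF1 by (auto; lra). unfold f1.
   assert (gt : g * t < 1). { assert (t < /g) by lra. apply Rmult_lt_reg_l with (/g); auto. rewrite <- Rmult_assoc, Rinv_l; lra. }
   rewrite powp_div by (try nra; lra). rewrite powp_opp by lra. toR; field. apply Rgt_not_eq, powp_gt0; lra.
 - intros x Hx Hc. rewrite UF2 by (auto; lra). unfold f2.
   destruct (Rle_dec (1 - g*x) 0).
   { assert (Q : (1 - g*x)/(g*t) <= 0). { unfold Rdiv. assert (0 < /(g*t)) by (apply Rinv_0_lt_compat; nra).
       apply Rmult_le_0_r; lra. }
     rewrite (powp_nonpos _ _ Q), (powp_nonpos (1 - g*x)) by auto. toR; ring. }
   rewrite powp_div by (try nra; lra). rewrite powp_opp by nra. toR; field. apply Rgt_not_eq, powp_gt0; nra.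
 - intros hc. unfold F1, F2.
   assert (gt : g * t < 1). { assert (t < /g) by lra. apply Rmult_lt_reg_l with (/g); auto. rewrite <- Rmult_assoc, Rinv_l; lra. }
   replace (0 + g * (/g - t)) with (1 - g*t) by (field; lra). replace (1 + - g * (/g - t)) with (g*t) by (field; lra).
   rewrite <- !powp_plus. replace (- / g + (/ g + 1)) with 1 by ring. rewrite !powp_1r by nra. reflexivity.
Qed.
End I.


Section J.
Variable g : R.
Hypothesis hg : 0 < g.

Lemma dxi_cont x : 0 < x -> continuity_pt (dxi g) x.
Proof. intros hx. apply continuity_pt_ext_loc with (fun y => powp ((1+g)*y) (-/(1+g))).
 exists (mkposreal x hx). intros y Hy; unball Hy. apply Rabs_def2 in Hy. unfold dxi. rewrite Rabs_pos_eq by lra. reflexivity.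
 apply (continuity_pt_comp (fun y => (1+g)*y) (fun z => powp z (-/(1+g)))).
 apply derivable_continuous_pt. exists (1+g). apply lin_deriv.
 apply powp_cont_pos. nra. Qed.

Lemma xi_cont x : x <> 0 -> continuity_pt (xi g) x.
Proof. intros. apply derivable_continuous_pt. exists (dxi g x). apply xi_deriv; auto. Qed.

Lemma xi_mono a b : 0 < a <= b -> xi g a <= xi g b.
Proof. intros [ha hab]. rewrite !xi_pos by lra. unfold xip. apply Rmult_le_compat_l. left; apply Rinv_0_lt_compat; lra.
 apply powp_mono. apply Rlt_le, Rdiv_lt_0_compat; lra. nra. Qed.

Lemma rho_int t a b : 0 < t -> 0 < a <= b ->
  RInt.is_RInt (fun x => rho g x t) a b (GW g t (xi g b) - GW g t (xi g a)).
Proof. intros ht [ha hab].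
 assert (C : forall x, a <= x <= b -> continuity_pt (fun x => rho g x t) x).
 { intros x Hx. unfold rho. apply continuity_pt_mult. apply dxi_cont; lra.
   apply (continuity_pt_comp (xi g) (fun z => u_ex g z t)). apply xi_cont; lra.
   apply u_cont; auto. rewrite xi_pos by lra. assert (0 < xip g x) by (apply xip_pos; lra). lra. }
 assert (E : ex_RInt (fun x => rho g x t) a b).
 { apply (ex_RInt_continuous (V:=R_CompleteNormedModule)). intros z Hz. rewrite Rmin_left, Rmax_right in Hz by lra.
   apply continuity_pt_filterlim, C; auto. }
 assert (Eq : RInt (fun x => rho g x t) a b = RInt (fun z => u_ex g z t) (xi g a) (xi g b)).
 { rewrite <- (RInt_comp (V:=R_CompleteNormedModule) (fun z => u_ex g z t) (xi g) (dxi g)). reflexivity.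
   - intros x Hx. rewrite Rmin_left, Rmax_right in Hx by lra. apply continuity_pt_filterlim. apply u_cont; auto.
     rewrite xi_pos by lra. assert (0 < xip g x) by (apply xip_pos; lra). lra.
   - intros x Hx. rewrite Rmin_left, Rmax_right in Hx by lra. split. apply is_derive_Reals, xi_deriv; lra.
     apply continuity_pt_filterlim, dxi_cont; lra. }
 assert (V := u_int g hg t ht (xi g a) (xi g b) ltac:(split; [rewrite xi_pos by lra; apply xip_pos; lra|apply xi_mono; lra])).
 apply RInt_unique' in V. rewrite <- V, <- Eq. apply (RInt_correct (V:=R_CompleteNormedModule)); auto.
Qed.
End J.


Section K.
Variable g : R.
Hypothesis hg : 0 < g.

Lemma xip_ctn : ctn (xip g).
Proof. unfold xip. apply ctn_mult. apply ctn_const. apply (ctn_comp (fun x => (1+g)*x) (fun z => powp z (g/(1+g)))).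
 apply ctn_mult. apply ctn_const. apply ctn_id. apply ctn_powp. apply Rdiv_lt_0_compat; lra. Qed.
Lemma xip0 : xip g 0 = 0.
Proof. unfold xip. rewrite Rmult_0_r, powp_nonpos by lra. ring. Qed.

Lemma xi_big b : / (1+g) <= b -> / g <= xi g b.
Proof. intros hb. assert (0 < /(1+g)) by (apply Rinv_0_lt_compat; lra).
 rewrite xi_pos by lra. unfold xip. rewrite <- (Rmult_1_r (/g)) at 1. apply Rmult_le_compat_l. left; apply Rinv_0_lt_compat; lra.
 assert (M : powp 1 (g/(1+g)) <= powp ((1+g)*b) (g/(1+g))).
 { apply powp_mono. apply Rlt_le, Rdiv_lt_0_compat; lra. split. lra.
   apply Rmult_le_reg_l with (/(1+g)); auto. rewrite <- Rmult_assoc, Rinv_l by lra. lra. }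
 rewrite powp_1l in M. exact M. Qed.

Lemma GW_big t b : 0 < t -> / (1+g) <= b -> GW g t (xi g b) = / (1+g).
Proof. intros ht hb. assert (H := xi_big b hb). unfold GW.
 destruct (Rle_dec (xi g b) (/g - t)); [lra|]. unfold F2.
 rewrite (powp_nonpos (1 + - g * xi g b)). field. lra.
 assert (g * /g <= g * xi g b) by (apply Rmult_le_compat_l; lra). rewrite Rinv_r in H0 by lra. lra. Qed.

Definition G0 t := if Rlt_dec t (/g) then 0 else F2 g t 0.

Lemma cont_comp_xip F : ctn F -> continuity_pt (fun a => F (xip g a)) 0.
Proof. intros C. apply (continuity_pt_comp (xip g) F). apply xip_ctn. apply C. Qed.

Lemma lim_a t : 0 < t -> forall eps, 0 < eps -> exists d, 0 < d /\ forall a, 0 < a < d -> Rabs (GW g t (xi g a) - G0 t) < eps.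
Proof. intros ht eps he. unfold G0. assert (pg := pg2 g hg).
 destruct (Rlt_dec t (/g)) as [tl|tl].
 - assert (C1 : continuity_pt (fun a => F1 g t (xip g a)) 0).
   { apply cont_comp_xip. intros s. apply derivable_continuous_pt. exists (f1 g t s). apply is_derive_Reals, F1_der; auto. }
   assert (C2 := xip_ctn 0).
   rewrite continuity_pt_locally in C1, C2.
   destruct (C1 (mkposreal eps he)) as [d1 H1]. destruct (C2 (mkposreal (/g - t) ltac:(lra))) as [d2 H2].
   exists (Rmin d1 d2). split. apply Rmin_pos; apply cond_pos. intros a Ha.
   assert (m1 := Rmin_l d1 d2). assert (m2 := Rmin_r d1 d2).
   assert (B : forall d : posreal, a < d -> ball 0 d a).
   { intros d hd. unfold ball; simpl; unfold AbsRing_ball, abs, minus, plus, opp; simpl. rewrite Ropp_0, Rplus_0_r, Rabs_pos_eq; lra. }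
   specialize (H1 a (B d1 ltac:(lra))). specialize (H2 a (B d2 ltac:(lra))). simpl in H1, H2.
   rewrite xip0 in H1, H2. rewrite Rminus_0_r in H2.
   unfold GW. rewrite xi_pos by lra. destruct (Rle_dec (xip g a) (/g - t)).
   + replace (F1 g t 0) with 0 in H1. exact H1. unfold F1. rewrite Rmult_0_r, Rplus_0_r, (powp_nonpos 0) by lra. field. lra.
   + exfalso. apply Rabs_def2 in H2. lra.
 - assert (C1 : continuity_pt (fun a => F2 g t (xip g a)) 0).
   { apply cont_comp_xip. intros s. apply derivable_continuous_pt. exists (f2 g t s). apply is_derive_Reals, F2_der; auto. }
   rewrite continuity_pt_locally in C1. destruct (C1 (mkposreal eps he)) as [d1 H1].
   exists d1. split. apply cond_pos. intros a Ha.
   assert (B : ball 0 d1 a).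
   { unfold ball; simpl; unfold AbsRing_ball, abs, minus, plus, opp; simpl. rewrite Ropp_0, Rplus_0_r, Rabs_pos_eq; lra. }
   specialize (H1 a B). simpl in H1. rewrite xip0 in H1.
   unfold GW. rewrite xi_pos by lra. assert (0 < xip g a) by (apply xip_pos; lra).
   destruct (Rle_dec (xip g a) (/g - t)); [lra|]. exact H1.
Qed.

Lemma improper_pos t : 0 < t -> improper_int0 (fun x => rho g x t) (/ (1+g) - G0 t).
Proof. intros ht eps he. destruct (lim_a t ht eps he) as [d1 [hd1 H1]].
 set (d := Rmin d1 1). assert (hd : 0 < d) by (apply Rmin_pos; lra).
 assert (m1 := Rmin_l d1 1). assert (m2 := Rmin_r d1 1). fold d in m1, m2.
 exists d. split; auto. intros a b Ha Hb.
 assert (id1 : 1 <= / d). { rewrite <- Rinv_1. apply Rinv_le_contravar; lra. }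
 assert (Hb1 : / (1+g) <= b). { assert (/(1+g) < 1). { rewrite <- Rinv_1. apply Rinv_lt_contravar; lra. } lra. }
 exists (GW g t (xi g b) - GW g t (xi g a)). split.
 apply cis_to_is. apply rho_int; auto. lra.
 rewrite GW_big by auto. specialize (H1 a ltac:(lra)).
 replace (/ (1 + g) - GW g t (xi g a) - (/ (1 + g) - G0 t)) with (- (GW g t (xi g a) - G0 t)) by ring.
 rewrite Rabs_Ropp. auto.
Qed.

Lemma rho_t0 x : 0 < x -> rho g x 0 = if Rle_dec x (/(1+g)) then 1 else 0.
Proof. intros hx. rewrite rho_pos by (auto; lra). unfold rho_ex, rho_case2.
 assert (pg := pg2 g hg).
 replace (1 - g * 0) with 1 by ring. rewrite (Rmax_right 0 1) by lra. rewrite !powp_1l.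
 unfold Rdiv; rewrite Rmult_1_l.
 destruct (Rle_dec x 0); [lra|].
 destruct (Rle_dec x (/(1+g))).
 - destruct (Rle_dec 0 0); [|lra]. destruct (Rlt_dec 0 (/g)); [|lra]. reflexivity.
 - rewrite Rmax_right by (left; apply Rinv_0_lt_compat; lra). destruct (Rle_dec (/(1+g)) x); [reflexivity|lra].
Qed.

Lemma improper_0 : improper_int0 (fun x => rho g x 0) (/ (1+g)).
Proof. intros eps he. assert (hc : 0 < /(1+g)) by (apply Rinv_0_lt_compat; lra).
 assert (hc1 : /(1+g) < 1) by (rewrite <- Rinv_1; apply Rinv_lt_contravar; lra).
 set (d := Rmin (Rmin eps 1) (/(1+g))). assert (hd : 0 < d) by (apply Rmin_pos; [apply Rmin_pos|]; lra).
 assert (m1 := Rmin_l (Rmin eps 1) (/(1+g))). assert (m2 := Rmin_r (Rmin eps 1) (/(1+g))).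
 assert (m3 := Rmin_l eps 1). assert (m4 := Rmin_r eps 1). fold d in m1, m2.
 exists d. split; auto. intros a b Ha Hb.
 assert (id1 : 1 <= / d). { rewrite <- Rinv_1. apply Rinv_le_contravar; lra. }
 exists (/(1+g) - a). split.
 - apply cis_to_is.
   assert (H := two_piece (fun x => rho g x 0) (fun x => x) (fun _ => /(1+g)) (fun _ => 1) (fun _ => 0) (/(1+g)) a b ltac:(lra)
     (fun x => is_derive_id x) (fun x => is_derive_const (/(1+g)) x) (ctn_const 1) (ctn_const 0)).
   assert (H' : RInt.is_RInt (fun x => rho g x 0) a b ((if Rle_dec b (/(1+g)) then b else /(1+g)) - (if Rle_dec a (/(1+g)) then a else /(1+g)))).
   { apply H.
     intros x Hx Hc. rewrite rho_t0 by lra. destruct (Rle_dec x (/(1+g))); [reflexivity|lra].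
     intros x Hx Hc. rewrite rho_t0 by lra. destruct (Rle_dec x (/(1+g))); [lra|reflexivity].
     intros; reflexivity. }
   destruct (Rle_dec b (/(1+g))) in H'; [lra|]. destruct (Rle_dec a (/(1+g))) in H'; [|lra]. exact H'.
 - replace (/ (1 + g) - a - / (1 + g)) with (-a) by ring. rewrite Rabs_Ropp, Rabs_pos_eq; lra.
Qed.

Lemma part6 t : 0 <= t <= / g -> improper_int0 (fun x => rho g x t) (/ (1 + g)).
Proof. intros [h1 h2]. destruct (Req_dec t 0) as [->|hn]. apply improper_0.
 replace (/(1+g)) with (/(1+g) - G0 t). apply improper_pos; lra.
 unfold G0. destruct (Rlt_dec t (/g)). ring. assert (t = /g) by lra. subst t.
 unfold F2. rewrite Rinv_r by lra. rewrite powp_1l. rewrite Rmult_0_r, Rplus_0_r, powp_1l. field. lra.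
Qed.

Lemma part7 t : / g <= t -> improper_int0 (fun x => rho g x t) (/ (1 + g) * powp (g * t) (- / g)).
Proof. intros h. assert (pg := pg2 g hg).
 replace (/ (1 + g) * powp (g * t) (- / g)) with (/(1+g) - G0 t). apply improper_pos; lra.
 unfold G0. destruct (Rlt_dec t (/g)); [lra|]. unfold F2. rewrite Rmult_0_r, Rplus_0_r, powp_1l. field. lra.
Qed.
End K.


Theorem mainTheorem4 (g : R) (hg : 0 < g) :
  (* the datum: u_I(z) = (g z)^{1/g} chi_[0,1/g](z) *)
  (forall z, u_I g (fI_ex g) z =
     (if Rle_dec 0 z then (if Rle_dec z (/ g) then powp (g * z) (/ g) else 0)
      else 0)) /\
  (* the explicit u is the entropy solution of the split Cauchy problem *)
  entropy_solution g (u_I g (fI_ex g)) (u_ex g) /\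
  (* xi'(x) = dxi g x for x <> 0, so rho = xi' * u(xi, t) *)
  (forall x, x <> 0 -> derivable_pt_lim (xi g) x (dxi g x)) /\
  (forall x t, 0 < x -> 0 <= t -> rho g x t = rho_ex g x t) /\
  (forall x t, x < 0 -> 0 <= t -> rho g x t = 0) /\
  (forall t, 0 <= t <= / g -> improper_int0 (fun x => rho g x t) (/ (1 + g))) /\
  (forall t, / g <= t ->
     improper_int0 (fun x => rho g x t) (/ (1 + g) * powp (g * t) (- / g))).
Proof.
 split. intros z; apply datum; auto.
 split. split. exists (2 + /g). intros t ht. apply L1BV; auto.
   split. apply weak_pos; auto. split. apply weak_neg; auto. intros t ht; apply oleinik; auto.
 split. intros x hx; apply xi_deriv; auto.
 split. intros x t hx ht; apply rho_pos; auto.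
 split. intros x t hx ht; apply rho_neg; auto.
 split. intros t ht; apply part6; auto.
 intros t ht; apply part7; auto.
Qed.
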